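(* (i) $U=u_1u_2u_1+u_1s_2s_1^{-1}s_2u_1+u_1s_2^{-1}s_1s_2^{-1}u_1+u_1\omega+u_1\omega^{-1}+u_1\omega^{-2}$. (ii) $H_4=U$.
   Context: Let $B_3=\langle s_1,s_2\mid s_1s_2s_1=s_2s_1s_2\rangle$, $R_4=\mathbb{Z}[a,b,c,d,d^{-1}]$, and let $H_4$ be the quotient of the group algebra $R_4B_3$ by the relations $s_i^4=as_i^3+bs_i^2+cs_i+d$ for $i=1,2$; identify $s_i$ with their images in $H_4$. For $i=1,2$ let $u_i$ be the $R_4$-subalgebra of $H_4$ generated by $s_i$. Set $\omega=s_2s_1^2s_2$. For $R_4$-submodules (or elements) $X_1,\dots,X_n$ of $H_4$, $X_1\cdots X_n$ denotes the $R_4$-submodule spanned by all products $x_1\cdots x_n$ with $x_j\in X_j$, and sums are sums of submodules. Define $U'=u_1u_2u_1+u_1s_2s_1^{-1}s_2u_1+u_1s_2^{-1}s_1s_2^{-1}u_1+u_1s_2^{-1}s_1^{-2}s_2^{-1}$ and $U=U'+u_1s_2s_1^{-2}s_2u_1+u_1s_2^{-2}s_1^{-2}s_2^{-2}u_1$. *)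

(* Defs.v *)
From HB Require Import structures.
From mathcomp Require Import all_boot all_algebra.
Set Implicit Arguments. Unset Strict Implicit. Unset Printing Implicit Defensive.
Import GRing.Theory.
Local Open Scope ring_scope.

(* R-submodules of an R-algebra A are represented as predicates A -> Prop. *)
Section Submodules.
Variables (R : comUnitRingType) (A : unitAlgType R).

Inductive span (P : A -> Prop) : A -> Prop :=
| span0 : span P 0
| span_in x : P x -> span P x
| spanD x y : span P x -> span P y -> span P (x + y)
| spanZ (r : R) x : span P x -> span P (r *: x).

Definition elt (x : A) : A -> Prop := span (fun z => z = x).

Definition smul (X Y : A -> Prop) : A -> Prop :=
  span (fun z => exists x y, X x /\ Y y /\ z = x * y).

Definition sadd (X Y : A -> Prop) : A -> Prop :=
  span (fun z => X z \/ Y z).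

Inductive subalg (g : seq A) : A -> Prop :=
| subalg_gen x : x \in g -> subalg g x
| subalg1 : subalg g 1
| subalgD x y : subalg g x -> subalg g y -> subalg g (x + y)
| subalgZ (r : R) x : subalg g x -> subalg g (r *: x)
| subalgM x y : subalg g x -> subalg g y -> subalg g (x * y).

Definition seteq (X Y : A -> Prop) : Prop := forall z, X z <-> Y z.

End Submodules.

(* Hypotheses defining (a quotient of) H_4 over a base ring with parameters
   a b c d : the images s1 s2 of the braid generators are units, satisfy the
   braid relation and the quartic relation s^4 = a s^3 + b s^2 + c s + d. *)
Definition H4_rels (R : comUnitRingType) (A : unitAlgType R)
    (a b c d : R) (s1 s2 : A) : Prop :=
  [/\ d \is a GRing.unit, s1 \is a GRing.unit & s2 \is a GRing.unit] /\
  [/\ s1 * s2 * s1 = s2 * s1 * s2,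
      s1 ^+ 4 = a *: s1 ^+ 3 + b *: s1 ^+ 2 + c *: s1 + d%:A &
      s2 ^+ 4 = a *: s2 ^+ 3 + b *: s2 ^+ 2 + c *: s2 + d%:A].

Section UDefs.
Variables (R : comUnitRingType) (A : unitAlgType R) (s1 s2 : A).

Definition u1 : A -> Prop := subalg [:: s1].
Definition u2 : A -> Prop := subalg [:: s2].
Definition omega : A := s2 * s1 ^+ 2 * s2.

Local Notation "X ** Y" := (smul X Y) (at level 40, left associativity).
Local Notation "X :++: Y" := (sadd X Y) (at level 50, left associativity).

Definition U' : A -> Prop :=
  u1 ** u2 ** u1
  :++: u1 ** (elt (s2 * s1^-1 * s2)) ** u1
  :++: u1 ** (elt (s2^-1 * s1 * s2^-1)) ** u1
  :++: u1 ** (elt (s2^-1 * s1 ^- 2 * s2^-1)).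

Definition U : A -> Prop :=
  U'
  :++: u1 ** (elt (s2 * s1 ^- 2 * s2)) ** u1
  :++: u1 ** (elt (s2 ^- 2 * s1 ^- 2 * s2 ^- 2)) ** u1.

Definition U_rhs : A -> Prop :=
  u1 ** u2 ** u1
  :++: u1 ** (elt (s2 * s1^-1 * s2)) ** u1
  :++: u1 ** (elt (s2^-1 * s1 * s2^-1)) ** u1
  :++: u1 ** (elt (omega))
  :++: u1 ** (elt (omega^-1))
  :++: u1 ** (elt (omega ^- 2)).

End UDefs.

(* Main.v *)
Require Import Defs.
From HB Require Import structures.
From mathcomp Require Import all_boot all_algebra.
Import GRing.Theory.
Local Open Scope ring_scope.

Set Implicit Arguments. Unset Strict Implicit.


Definition cform := (int * seq nat)%type.

Definition mul_tok (e : cform) (t : nat) : cform :=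
  let: (k, s) := e in
  match s with
  | [::] => (k, [:: t])
  | u :: s' =>
    match t, u with
    | 0%N, 0%N => (k + 1, s')
    | 0%N, _ => (k, t :: s)
    | _, 0%N => (k, t :: s)
    | 1%N, 1%N => (k, 2%N :: s')
    | 1%N, _ => (k + 1, s')
    | _, 1%N => (k + 1, s')
    | _, _ => (k + 1, 1%N :: s')
    end
  end.

Definition let_toks (l : nat) : nat * nat :=
  match l with
  | 0%N => (2%N, 0%N)
  | 1%N => (0%N, 1%N)
  | 2%N => (0%N, 2%N)
  | _ => (1%N, 0%N)
  end.

Definition mul_let (e : cform) (l : nat) : cform :=
  let: (t1, t2) := let_toks l in
  mul_tok (mul_tok (e.1 - 1, e.2) t1) t2.

Definition canon_from (e : cform) (w : seq nat) : cform := foldl mul_let e w.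
Definition canon (w : seq nat) : cform := canon_from (0, [::]) w.

Definition step := (seq nat * nat * bool * seq nat)%type.

Definition step_new (kn : seq cform) (st : step) : option cform :=
  let: (p, l, top, q) := st in
  if (l == 0%N) || (l == 2%N) then
    let P := canon p in
    let pt j := canon_from (canon_from P (nseq j l)) q in
    if top then
      (if all (fun j => pt j \in kn) [:: 0; 1; 2; 3]%N then Some (pt 4%N) else None)
    else
      (if all (fun j => pt j \in kn) [:: 1; 2; 3; 4]%N then Some (pt 0%N) else None)
  else None.

Fixpoint run (kn : seq cform) (sts : seq step) : option (seq cform) :=
  match sts with
  | [::] => Some kn
  | st :: sts' =>
    match step_new kn st with
    | Some e => run (e :: kn) sts'
    | None => None
    end
  end.

Definition check_cert (basis : seq (seq nat)) (sts : seq step) (targets : seq (seq nat)) : bool :=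
  match run (map canon basis) sts with
  | Some kn => all (fun t => canon t \in kn) targets
  | None => false
  end.

Section Sem.
Variables (R : comUnitRingType) (A : unitAlgType R) (a b c d : R) (s1 s2 : A).
Hypothesis H : H4_rels a b c d s1 s2.

Definition letA (l : nat) : A :=
  match l with 0%N => s1 | 1%N => s1^-1 | 2%N => s2 | _ => s2^-1 end.
Definition evw (w : seq nat) : A := foldl (fun acc l => acc * letA l) 1 w.

Lemma ev_from (x : A) w : foldl (fun acc l => acc * letA l) x w = x * evw w.
Proof.
elim: w x => [|l w IH] x /=; first by rewrite mulr1.
by rewrite /evw /= (IH (x * letA l)) (IH (1 * letA l)) mul1r mulrA.
Qed.

Lemma ev_cons l w : evw (l :: w) = letA l * evw w.
Proof. by rewrite /evw /= ev_from mul1r. Qed.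

Lemma ev_cat u v : evw (u ++ v) = evw u * evw v.
Proof. by rewrite /evw foldl_cat ev_from. Qed.

Lemma ev_nseq n l : evw (nseq n l) = letA l ^+ n.
Proof.
elim: n => [|n IH]; first by rewrite expr0.
by rewrite -addn1 nseqD ev_cat IH exprD expr1 /evw /= mul1r.
Qed.

Definition dl := s1 * s2 * s1.
Definition bt := s1 * s2.
Definition zz := dl * dl.
Definition tokA (t : nat) : A := match t with 0%N => dl | 1%N => bt | _ => bt * bt end.
Definition tprod (s : seq nat) : A := foldr (fun t acc => acc * tokA t) 1 s.
Definition evc (e : cform) : A := zz ^ e.1 * tprod e.2.

Let u1 : s1 \is a GRing.unit. Proof. by case: H => [[_ ? _] _]. Qed.
Let u2 : s2 \is a GRing.unit. Proof. by case: H => [[_ _ ?] _]. Qed.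
Let ud : d \is a GRing.unit. Proof. by case: H => [[? _ _] _]. Qed.
Let braid : s1 * s2 * s1 = s2 * s1 * s2. Proof. by case: H => [_ [? _ _]]. Qed.

Lemma zz_unit : zz \is a GRing.unit.
Proof.
have hdl : dl \is a GRing.unit by rewrite /dl !unitrMl.
by rewrite /zz unitrMl.
Qed.

Lemma bt3 : bt * bt * bt = zz.
Proof.
rewrite /bt /zz /dl.
have -> : s1 * s2 * (s1 * s2) * (s1 * s2) = (s1 * s2 * s1) * (s2 * s1 * s2) by rewrite !mulrA.
by rewrite -braid.
Qed.

Lemma zz_comm_tok t : tokA t * zz = zz * tokA t.
Proof.
case: t => [|[|t]] /=.
- by rewrite /zz !mulrA.
- by rewrite -bt3 !mulrA.
- by rewrite -bt3 !mulrA.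
Qed.

Lemma zz_comm_tprod s : tprod s * zz = zz * tprod s.
Proof.
elim: s => [|t s IH] /=; first by rewrite mul1r mulr1.
by rewrite -mulrA zz_comm_tok mulrA IH mulrA.
Qed.

Lemma zzS (k : int) : zz ^ (k + 1) = zz ^ k * zz.
Proof. by rewrite exprzDr ?zz_unit // expr1z. Qed.

Lemma mul_tok_sound e t : evc (mul_tok e t) = evc e * tokA t.
Proof.
case: e => k [|u s] /=; rewrite /evc /=.
  by rewrite mul1r mulr1.
have Hz : forall X : A, zz ^ (k + 1) * tprod s * X = zz ^ k * tprod s * (zz * X).
  by move=> X; rewrite zzS -(mulrA (zz ^ k)) -(zz_comm_tprod s) !mulrA.
case: t => [|[|t]]; case: u => [|[|u]] /=; try by rewrite !mulrA.
- by rewrite -[LHS]mulr1 Hz mulr1 /zz !mulrA.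
- by rewrite -[LHS]mulr1 Hz mulr1 -bt3 !mulrA.
- by rewrite -[LHS]mulr1 Hz mulr1 -bt3 !mulrA.
- by rewrite [LHS]mulrA Hz -bt3 !mulrA.
Qed.

Lemma letter_toks l : let: (t1, t2) := let_toks l in tokA t1 * tokA t2 = zz * letA l.
Proof.
have Hdl : dl * bt = dl * dl * s1^-1.
  by rewrite -[RHS]mulrA [dl * s1^-1]mulrK.
case: l => [|[|[|l]]] /=.
- by rewrite -bt3 /dl /bt !mulrA.
- by rewrite /zz Hdl.
- by rewrite /zz /dl /bt !mulrA.
- rewrite -bt3 /dl -!mulrA; congr (_ * _); rewrite !mulrA mulrK //.
Qed.

Lemma aux_comm (Z Zi P W L : A) : Zi * W = 1 -> P * W = W * P ->
  Z * Zi * P * (W * L) = Z * P * L.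
Proof.
move=> h1 h2; rewrite -!mulrA; congr (_ * _).
by rewrite [P * (W * L)]mulrA h2 -mulrA [Zi * _]mulrA h1 mul1r.
Qed.

Lemma mul_let_sound e l : evc (mul_let e l) = evc e * letA l.
Proof.
rewrite /mul_let.
have := letter_toks l.
case: (let_toks l) => t1 t2 Ht.
rewrite !mul_tok_sound /evc /= -mulrA Ht.
have -> : zz ^ (e.1 - 1) = zz ^ e.1 * zz^-1.
  by rewrite exprzDr ?zz_unit // exprN1.
rewrite aux_comm //; first by rewrite mulVr ?zz_unit.
exact: zz_comm_tprod.
Qed.

Lemma canon_from_sound e w : evc (canon_from e w) = evc e * evw w.
Proof.
elim: w e => [|l w IH] e /=; first by rewrite /evw /= mulr1.
by rewrite IH mul_let_sound ev_cons mulrA.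
Qed.

Lemma canon_sound w : evc (canon w) = evw w.
Proof. by rewrite canon_from_sound /evc /= mulr1 expr0z mul1r. Qed.

Lemma quart l : (l == 0%N) || (l == 2%N) ->
  letA l ^+ 4 = a *: letA l ^+ 3 + b *: letA l ^+ 2 + c *: letA l + d%:A.
Proof. by case: H => _ [_ h1 h2]; case/orP => /eqP ->. Qed.

Section Closed.
Variable P : A -> Prop.
Hypotheses (P0 : P 0) (PD : forall x y, P x -> P y -> P (x + y))
  (PZ : forall r x, P x -> P (r *: x)).

Lemma PB x y : P x -> P y -> P (x - y).
Proof. by move=> hx hy; apply: PD => //; rewrite -scaleN1r; apply: PZ. Qed.

Lemma line_eq (p q s : A) :
  s ^+ 4 = a *: s ^+ 3 + b *: s ^+ 2 + c *: s + d%:A ->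
  p * s ^+ 4 * q = a *: (p * s ^+ 3 * q) + b *: (p * s ^+ 2 * q)
     + c *: (p * s ^+ 1 * q) + d *: (p * s ^+ 0 * q).
Proof.
move=> ->; rewrite expr1 expr0 mulr1 !mulrDr !mulrDl.
by rewrite -!scalerAr -!scalerAl ?mulr1.
Qed.

Lemma line_top p q l : (l == 0%N) || (l == 2%N) ->
  P (evw p * letA l ^+ 0 * evw q) -> P (evw p * letA l ^+ 1 * evw q) ->
  P (evw p * letA l ^+ 2 * evw q) -> P (evw p * letA l ^+ 3 * evw q) ->
  P (evw p * letA l ^+ 4 * evw q).
Proof.
move=> hl h0 h1 h2 h3; rewrite line_eq ?quart //.
by repeat apply: PD; apply: PZ.
Qed.

Lemma line_bot p q l : (l == 0%N) || (l == 2%N) ->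
  P (evw p * letA l ^+ 1 * evw q) -> P (evw p * letA l ^+ 2 * evw q) ->
  P (evw p * letA l ^+ 3 * evw q) -> P (evw p * letA l ^+ 4 * evw q) ->
  P (evw p * letA l ^+ 0 * evw q).
Proof.
move=> hl h1 h2 h3 h4.
have e := line_eq (evw p) (evw q) (quart hl).
have -> : evw p * letA l ^+ 0 * evw q = d^-1 *: (evw p * letA l ^+ 4 * evw q
   - (a *: (evw p * letA l ^+ 3 * evw q) + b *: (evw p * letA l ^+ 2 * evw q)
   + c *: (evw p * letA l ^+ 1 * evw q))).
  by rewrite e addrAC subrr add0r scalerA mulVr ?scale1r.
by apply: PZ; apply: PB => //; repeat apply: PD; apply: PZ.
Qed.

Definition Good (kn : seq cform) := forall e, e \in kn -> P (evc e).

Lemma pt_sound p l j q :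
  evc (canon_from (canon_from (canon p) (nseq j l)) q) = evw p * letA l ^+ j * evw q.
Proof.
have e0 : evc (0, [::]) = 1 by rewrite /evc /= mulr1 expr0z.
by rewrite /canon !canon_from_sound e0 mul1r ev_nseq.
Qed.

Lemma step_sound kn st e : Good kn -> step_new kn st = Some e -> P (evc e).
Proof.
case: st => [[[p l] top] q] G; rewrite /step_new.
case hl: ((l == 0%N) || (l == 2%N)) => //.
case: top.
- case: ifP => // /allP hall E.
  have {E} <- : canon_from (canon_from (canon p) (nseq 4 l)) q = e by case: E.
  rewrite pt_sound; apply: line_top => //; rewrite -pt_sound; apply: G;
  by apply: hall; rewrite !inE.
- case: ifP => // /allP hall E.
  have {E} <- : canon_from (canon_from (canon p) (nseq 0 l)) q = e by case: E.
  rewrite pt_sound; apply: line_bot => //; rewrite -pt_sound; apply: G;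
  by apply: hall; rewrite !inE.
Qed.

Lemma run_sound kn sts kn' : Good kn -> run kn sts = Some kn' -> Good kn'.
Proof.
elim: sts kn => [|st sts IH] kn G /=; first by move=> [<-].
case he: (step_new kn st) => [e|] // hr.
apply: (IH (e :: kn)) => // f; rewrite inE => /orP [/eqP -> |]; last exact: G.
exact: step_sound he.
Qed.

Lemma check_cert_sound basis sts targets :
  (forall w, w \in basis -> P (evw w)) -> check_cert basis sts targets ->
  forall t, t \in targets -> P (evw t).
Proof.
move=> hb; rewrite /check_cert.
case hr: (run _ _) => [kn|] // /allP ht t /ht tin.
have G : Good (map canon basis).
  by move=> e /mapP [w wb ->]; rewrite canon_sound; apply: hb.
by rewrite -canon_sound; exact: (run_sound G hr tin).
Qed.

End Closed.
End Sem.

Unset Implicit Arguments. Set Strict Implicit.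

Definition xs (i : nat) : seq nat := nseq i 0%N.
Definition ys (i : nat) : seq nat := nseq i 2%N.
Definition Mw : seq (seq nat) :=
  [seq xs i ++ w | i <- iota 0 4, w <- [seq ys j ++ xs k | j <- iota 0 4, k <- iota 0 4]].
Definition bimod (mid : seq nat) : seq (seq nat) :=
  [seq xs i ++ mid ++ xs k | i <- iota 0 4, k <- iota 0 4].
Definition lmod (mid : seq nat) : seq (seq nat) := [seq xs i ++ mid | i <- iota 0 4].
Definition basisU : seq (seq nat) :=
  Mw ++ bimod [:: 2; 1; 2] ++ bimod [:: 3; 0; 3] ++ lmod [:: 3; 1; 1; 3]
     ++ bimod [:: 2; 1; 1; 2] ++ bimod [:: 3; 3; 1; 1; 3; 3].
Definition basisR : seq (seq nat) :=
  Mw ++ bimod [:: 2; 1; 2] ++ bimod [:: 3; 0; 3] ++ lmod [:: 2; 0; 0; 2]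
     ++ lmod [:: 3; 1; 1; 3] ++ lmod [:: 3; 1; 1; 3; 3; 1; 1; 3].
Definition zw : seq nat := [:: 0; 2; 0; 0; 2; 0]%N.
Definition ziw : seq nat := [:: 1; 3; 1; 1; 3; 1]%N.
Definition M0w : seq (seq nat) :=
  [seq xs i ++ w | i <- iota 0 4, w <- [seq ys j ++ xs k | j <- iota 1 3, k <- iota 0 4]]
  ++ [seq xs i | i <- iota 0 4].
Definition basisV : seq (seq nat) :=
  M0w ++ [seq zw ++ w | w <- M0w] ++ [seq ziw ++ w | w <- M0w]
  ++ [seq ziw ++ ziw ++ xs i | i <- iota 0 4].
Definition targets (bs : seq (seq nat)) : seq (seq nat) :=
  [seq w ++ [:: g] | w <- bs, g <- [:: 0; 1; 2; 3]%N].

Section Memb.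
Variables (R : comUnitRingType) (A : unitAlgType R) (a b c d : R) (s1 s2 : A).
Hypothesis H : H4_rels a b c d s1 s2.
Let un1 : s1 \is a GRing.unit. Proof. by case: H => [[_ ? _] _]. Qed.
Let un2 : s2 \is a GRing.unit. Proof. by case: H => [[_ _ ?] _]. Qed.

Local Notation ev := (evw s1 s2).

Lemma subalg_pow (s : A) n : subalg [:: s] (s ^+ n).
Proof.
elim: n => [|n IH]; first by rewrite expr0; apply: subalg1.
by rewrite exprS; apply: subalgM => //; apply: subalg_gen; rewrite inE.
Qed.

Lemma elt_self (m : A) : elt m m.
Proof. by apply: span_in. Qed.

Lemma smul_in (X Y : A -> Prop) x y : X x -> Y y -> smul X Y (x * y).
Proof. by move=> hx hy; apply: span_in; exists x, y. Qed.

Lemma sadd_l (X Y : A -> Prop) x : X x -> sadd X Y x.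
Proof. by move=> h; apply: span_in; left. Qed.
Lemma sadd_r (X Y : A -> Prop) x : Y x -> sadd X Y x.
Proof. by move=> h; apply: span_in; right. Qed.

Lemma ev_xs i : ev (xs i) = s1 ^+ i.
Proof. exact: ev_nseq. Qed.
Lemma ev_ys i : ev (ys i) = s2 ^+ i.
Proof. exact: ev_nseq. Qed.

Lemma bimod_in (P : A -> Prop) mid :
  (forall i k, P (s1 ^+ i * ev mid * s1 ^+ k)) -> forall w, w \in bimod mid -> P (ev w).
Proof.
move=> h w /allpairsP [[i k] [_ _ ->]] /=.
by rewrite !ev_cat ev_xs ev_xs mulrA.
Qed.

Lemma lmod_in (P : A -> Prop) mid :
  (forall i, P (s1 ^+ i * ev mid)) -> forall w, w \in lmod mid -> P (ev w).
Proof. by move=> h w /mapP [i _ ->]; rewrite ev_cat ev_xs. Qed.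

Lemma Mw_in (P : A -> Prop) :
  (forall i j k, P (s1 ^+ i * s2 ^+ j * s1 ^+ k)) -> forall w, w \in Mw -> P (ev w).
Proof.
move=> h w.
case/allpairsP => [[i w']] [_ hw' ->].
case/allpairsP: hw' => [[j k]] [_ _ ->] /=.
by rewrite !ev_cat ev_xs ev_ys ev_xs mulrA.
Qed.

Lemma M0w_in (P : A -> Prop) :
  (forall i j k, P (s1 ^+ i * s2 ^+ j * s1 ^+ k)) -> forall w, w \in M0w -> P (ev w).
Proof.
move=> h w; rewrite mem_cat => /orP [].
- case/allpairsP => [[i w']] [_ hw' ->].
  case/allpairsP: hw' => [[j k]] [_ _ ->] /=.
  by rewrite !ev_cat ev_xs ev_ys ev_xs mulrA.
- case/mapP => i _ ->; rewrite ev_xs.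
  by have := h i 0%N 0%N; rewrite !expr0 !mulr1.
Qed.

Lemma ev3 x y z : ev [:: x; y; z] = letA s1 s2 x * letA s1 s2 y * letA s1 s2 z.
Proof. by rewrite /evw /= mul1r. Qed.

End Memb.
Definition stepsUV : seq step := [::
([::1],0,false,[::]);
([::3],2,false,[::]);
([::1;1;1],0,false,[::0]);
([::3],2,false,[::0]);
([::0;3],2,false,[::]);
([::3],2,false,[::0;0]);
([::0;3],2,false,[::0]);
([::0;0;3],2,false,[::]);
([::3],2,false,[::0;0;0]);
([::0;3],2,false,[::0;0]);
([::0],2,true,[::0;0]);
([::0;0;3],2,false,[::0]);
([::1],0,false,[::2]);
([::],0,true,[::2]);
([::3;3;3],2,false,[::2]);
([::2;1],0,false,[::]);
([::3;3;3],2,false,[::]);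
([::1],0,false,[::2;0]);
([::],0,true,[::2;0]);
([::3;3;3],2,false,[::2;0]);
([::2;1;1;1],0,false,[::0]);
([::1],0,false,[::2;0;0]);
([::],0,true,[::2;0;0]);
([::3;3;3],2,false,[::2;0;0]);
([::1],0,false,[::2;0;0;0]);
([::],0,true,[::2;0;0;0]);
([::3;3;3],2,false,[::2;0;0;0]);
([::1],0,false,[::2;2]);
([::],0,true,[::2;2]);
([::2;1;1],0,true,[::2]);
([::2;2;1],0,false,[::]);
([::1],0,false,[::2;2;0]);
([::],0,true,[::2;2;0]);
([::2;1;1],0,true,[::2;0]);
([::2;2;1;1;1],0,false,[::0]);
([::1],0,false,[::2;2;0;0]);
([::2;1;1],0,true,[::2;0;0]);
([::2;1],0,true,[::2;0;0]);
([::2],0,true,[::2;0;0]);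
([::1],0,false,[::2;2;0;0;0]);
([::1],0,false,[::2;2;2]);
([::2;2;2;1],0,false,[::]);
([::1],0,false,[::2;2;2;0;0;0]);
([::0;3],2,false,[::0;0;0]);
([::0;0;3],2,false,[::0;0]);
([::0;0;0;3],2,false,[::0]);
([::1;1;1],0,false,[::0;2]);
([::],0,true,[::0;2]);
([::3],2,false,[::0;2]);
([::],2,true,[::0;2]);
([::0;3;3;3],2,false,[::2]);
([::0;2;1;1],0,false,[::]);
([::],0,true,[::0;2;0]);
([::0;3;3;3],2,false,[::2;0]);
([::],0,true,[::0;2;0;0]);
([::0;3;3;3],2,false,[::2;0;0]);
([::],0,true,[::0;2;0;0;0]);
([::1;1;1],0,false,[::0;2;2]);
([::3],2,true,[::0;2;2]);
([::],2,true,[::0;2;2]);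
([::0;2;2;1],0,false,[::]);
([::3],2,true,[::0;2;2;0]);
([::],2,true,[::0;2;2;0]);
([::3;3],2,true,[::0;2;2;0;0]);
([::3],2,true,[::0;2;2;0;0]);
([::],2,true,[::0;2;2;0;0]);
([::0;0;3],2,false,[::0;0;0]);
([::0;0;0;3],2,false,[::0;0]);
([::0;3],2,false,[::0;2]);
([::0],2,true,[::0;2]);
([::0;0;3;3;3],2,false,[::2]);
([::],2,true,[::0;0;2;0]);
([::0;0;3;3;3],2,false,[::2;0]);
([::],2,true,[::0;0;2;0;0]);
([::0;0;3;3;3],2,false,[::2;0;0]);
([::],2,true,[::0;0;2;0;0;0]);
([::0;3],2,true,[::0;2;2]);
([::0],2,true,[::0;2;2]);
([::0;0;2;2;1],0,false,[::]);
([::0;0;2;2],0,true,[::]);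
([::0;3],2,true,[::0;2;2;0]);
([::0],2,true,[::0;2;2;0]);
([::0;3;3],2,true,[::0;2;2;0;0]);
([::0;3],2,true,[::0;2;2;0;0]);
([::0],2,true,[::0;2;2;0;0]);
([::0;0;3],2,false,[::0;2]);
([::0;0],2,true,[::0;2]);
([::0],2,true,[::0;0;2;0]);
([::0;0],2,true,[::0;2;0]);
([::0],2,true,[::0;0;2;0;0]);
([::0],2,true,[::0;0;2;0;0;0]);
([::0;0;3],2,true,[::0;2;2]);
([::0;0],2,true,[::0;2;2]);
([::0;0;0;2;2;1],0,false,[::]);
([::0;0;3],2,true,[::0;2;2;0]);
([::0;0],2,true,[::0;2;2;0]);
([::0;0;3;3],2,true,[::0;2;2;0;0]);
([::0;0;3],2,true,[::0;2;2;0;0]);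
([::0;0],2,true,[::0;2;2;0;0]);
([::0;0;0;2;2;2;1],0,false,[::]);
([::1],0,false,[::2;1;2]);
([::],0,true,[::2;1;2]);
([::],0,true,[::2;1;2;0]);
([::3;3;3;3],2,false,[::2;1;2;0]);
([::3;3;3;3],2,false,[::2;1;2;0;0;0]);
([::2],0,true,[::1;2;0;0;0]);
([::0;2;1;2;1],0,false,[::]);
([::0;2;1;3;3;3],2,true,[::2;0;0]);
([::0;2;1;3;3],2,true,[::2;0;0]);
([::],2,true,[::0;2;1;2;0;0;0]);
([::0],2,true,[::0;2;1;2;0;0;0]);
([::0;0;0;2;1;2;1],0,false,[::]);
([::1],0,false,[::3;0;3]);
([::3;0;3;1],0,false,[::]);
([::1],0,false,[::3;0;3;0]);
([::3;0;3;1;1;1],0,false,[::0]);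
([::1],0,false,[::3;0;3;0;0]);
([::1;1;1],0,false,[::0;3;0;3]);
([::0;3;0;3;1],0,false,[::]);
([::0;3;0;3;1;1;1],0,false,[::0]);
([::0;0;3;0;3;1],0,false,[::]);
([::0;0;3;0;3;1;1;1],0,false,[::0]);
([::0;0;0;3;0;3;1],0,false,[::]);
([::1],0,false,[::3;1;1;3]);
([::3;1;3;3],2,false,[::1;3]);
([::3;1;1;3;1;1;1],0,false,[::]);
([::0;2;1;1;3;3;3],2,true,[::2;0;0]);
([::0;2;1;1;3;3],2,true,[::2;0;0]);
([::1],0,false,[::3;3;1;1;3;3]);
([::0;3;3;1;1;3;3;1],0,false,[::]);
([::3],2,false,[::1]);
([::1;3],2,false,[::]);
([::1;1],0,false,[::3]);
([::3;1;1],0,false,[::]);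
([::3;3],2,false,[::1;1]);
([::1;1;3;3],2,false,[::]);
([::1],0,false,[::3;0]);
([::3;1;1;1;1],0,false,[::0]);
([::0;3;1],0,false,[::]);
([::1],0,false,[::3;0;0]);
([::1;1;1],0,false,[::0;3;0]);
([::0;3;1;1;1],0,false,[::0]);
([::0;3;1;1;1],0,false,[::]);
([::0;0;3;1],0,false,[::]);
([::1;1;1],0,false,[::0;3;0;0]);
([::3;3],2,true,[::0;2;2;2;2;0;0]);
([::1;3;3;3],2,false,[::2]);
([::1;2;1],0,false,[::]);
([::0;0;3;3],2,true,[::0;0;2]);
([::0;0;3],2,true,[::0;0;2]);
([::0;0],2,true,[::0;0;2]);
([::3;3;1],0,false,[::]);
([::3;3;3;3],2,false,[::2;1]);
([::1;3;3;3],2,false,[::2;0]);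
([::0;0],2,true,[::0;0;2;0]);
([::1;1],0,false,[::3;3;0]);
([::1;3;3;3],2,false,[::2;0;0]);
([::0;0],2,true,[::0;0;2;0;0]);
([::1;1],0,false,[::3;3;0;0]);
([::1;3;3],2,false,[::2;0;0;0]);
([::1;3;3],2,false,[::0;0;0]);
([::0;0],2,true,[::0;0;2;0;0;0]);
([::0;0;0;3],2,true,[::0;2;2]);
([::0;0;0],2,true,[::0;2;2]);
([::3;3;3],2,true,[::2;0;0;2]);
([::3;3],2,true,[::2;0;0;2]);
([::0;0;0;3],2,true,[::0;2;2;0]);
([::0;0;0],2,true,[::0;2;2;0]);
([::],0,true,[::2;0;0;2;0;0]);
([::],0,true,[::2;0;0;0;2;0;0]);
([::],0,true,[::2;0;0;0;0;2;0;0]);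
([::0;0;0;0],2,true,[::0;2]);
([::3;1;1;1],0,false,[::0;2]);
([::0;3;1;1;1],0,false,[::3]);
([::0;3;3;1;1],0,false,[::]);
([::0;2;1;3;3;3],2,false,[::1]);
([::0;0;0],2,true,[::0;0;2;0]);
([::0;0;0],2,true,[::0;0;2;0;0]);
([::0;0;0],2,true,[::0;0;2;0;0;0]);
([::2],0,true,[::2;2;0;2;2]);
([::2;2;1],0,true,[::2;2;0;2;2]);
([::2;2],0,true,[::2;2;0;2;2]);
([::],0,true,[::2;2;0;2;2;0;0]);
([::0;3;1;1;1],0,false,[::0;2]);
([::0;3;1;1;1],0,false,[::2]);
([::],2,true,[::0;2;2;2;2;0;2]);
([::2;2;2],0,true,[::2;0;0;2;0]);
([::3],2,false,[::0;2;2;2;0;2;2]);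
([::],2,true,[::0;2;2;2;0;2;2]);
([::0],2,true,[::0;2;2;1]);
([::0],2,true,[::0;2;2;0;0;0;0]);
([::0;2;2;1;1],0,true,[::2;2;0;2;2;0]);
([::0;0;3;1;1],0,false,[::0;2]);
([::0],2,true,[::0;2;2;2;2;0;2]);
([::0;2;2;2],0,true,[::2;0;0;2;0]);
([::0;3],2,true,[::0;2;2;2;0;2;2]);
([::0],2,true,[::0;2;2;2;0;2;2]);
([::0;0;2;2;1],0,true,[::2;2;0;2;2]);
([::0;0;2;2],0,true,[::2;2;0;2;2]);
([::],0,true,[::2;0;0;0;2;0;0;0]);
([::1],0,false,[::3;0;3;1]);
([::3;3;3;3],2,false,[::1;3;0;3;0]);
([::1;3;0;3;1;1;1],0,false,[::0]);
([::1;1],0,false,[::3;0;3;1;1]);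
([::3;3;3;3],2,false,[::1;3;0;3;0;0]);
([::1;1;1],0,false,[::0;3;0;3;1]);
([::0;3;1;1;1;1],0,false,[::0;3;1]);
([::0;3;1;1;1;1],0,false,[::0;3;1;1]);
([::0;0;3],2,false,[::3;0;3;1]);
([::1;1;1],0,false,[::1;3;1;1;3]);
([::1],0,false,[::3;1]);
([::3;1;3;3],2,false,[::]);
([::3;3],2,false,[::1;3]);
([::1;3;1;1;1],0,false,[::]);
([::1;3;3],2,false,[::1;3]);
([::1;1;3;1;1;1],0,false,[::]);
([::1;1;1],0,false,[::3;1;1]);
([::3;1;1;3;3;3],2,false,[::]);
([::3;1;1;1],0,false,[::3;1;1]);
([::3;3;1;3;3;3;3],2,false,[::1]);
([::1;1;1],0,false,[::3;1;1;1]);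
([::1;1;1;1],0,false,[::0;3;1]);
([::0;3;1;1;1;3;3],2,false,[::]);
([::],0,true,[::2;2;0;2;2;2;2;0;0]);
([::3;3;3],2,false,[::1;3;3]);
([::1;3;1;1;1;1],0,false,[::3]);
([::1;3;3;1],0,false,[::]);
([::1;3;3;3;3],2,false,[::2;1]);
([::0;0;2;2;2],0,true,[::2;0;0;2]);
([::1;1],0,false,[::3;3;1]);
([::3;1;1;1],0,false,[::3;3;1]);
([::0;0;2;2;2],0,true,[::2;0;0;2;0]);
([::1;1;3;3;1;1;1],0,false,[::0]);
([::0;0],2,true,[::0;2;2;2;0;2;2]);
([::0;0;0;2;2],0,true,[::2;2;0;2;2]);
([::0;0;0],2,true,[::0;2;2;2;2;0;2]);
([::0;0;0;2;2;2],0,true,[::2;0;0;2;0]);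
([::3;3;3;3],2,false,[::1;3;0;3;1]);
([::1;3],2,false,[::3;0;3;1]);
([::3;1;1;1],0,false,[::3;3;3;1;3;0;3;0]);
([::3;3;1],0,false,[::3;3;1;3;0;3;0]);
([::3;3;3;3;1;3;0;3;1;1;1;1],0,false,[::0]);
([::1;3;3;3;3],2,false,[::1;3;0;3;1;1]);
([::1;3;3;3;3],2,false,[::1;3;0;3;1]);
([::1;1;1;1],0,false,[::0;3;1;1;1;3;1;1]);
([::1;3;3;3],2,false,[::1;1;3;1;1]);
([::3;1;1;3;3;1;1],0,false,[::3]);
([::3;3;1;3;3;3;1;1],0,false,[::3;1]);
([::1;3;3],2,false,[::1;1;3;1]);
([::1;3;1;1;3;3],2,false,[::1;1;3]);
([::1;3;3;1;1;1],0,false,[::3;1]);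
([::3],2,false,[::1;1;1;3;1;1;1;3;1;1]);
([::1;1;1;1],0,false,[::3;1;1;3;3;1;1;3])]%N.

Definition stepsRV : seq step := [::
([::1],0,false,[::]);
([::3],2,false,[::]);
([::3],2,false,[::0]);
([::0;3],2,false,[::]);
([::3],2,false,[::0;0]);
([::0;3],2,false,[::0]);
([::0;0;3],2,false,[::]);
([::3],2,false,[::0;0;0]);
([::0;3],2,false,[::0;0]);
([::0;0;3],2,false,[::0]);
([::1],0,false,[::2]);
([::],0,true,[::2]);
([::3;3;3],2,false,[::2]);
([::2;1],0,false,[::]);
([::1],0,false,[::2;0]);
([::],0,true,[::2;0]);
([::3;3;3],2,false,[::2;0]);
([::1],0,false,[::2;0;0]);
([::],0,true,[::2;0;0]);
([::3;3;3],2,false,[::2;0;0]);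
([::1],0,false,[::2;0;0;0]);
([::],0,true,[::2;0;0;0]);
([::3;3;3],2,false,[::2;0;0;0]);
([::1],0,false,[::2;2]);
([::],0,true,[::2;2]);
([::2;2;1],0,false,[::]);
([::1],0,false,[::2;2;0]);
([::],0,true,[::2;2;0]);
([::1],0,false,[::2;2;0;0]);
([::],0,true,[::2;2;0;0]);
([::2;1],0,true,[::2;0;0]);
([::2],0,true,[::2;0;0]);
([::1],0,false,[::2;2;0;0;0]);
([::],0,true,[::2;2;0;0;0]);
([::1],0,false,[::2;2;2]);
([::2;2;2;1],0,false,[::]);
([::1],0,false,[::2;2;2;0;0;0]);
([::0;3],2,false,[::0;0;0]);
([::0;0;3],2,false,[::0;0]);
([::0;0;0;3],2,false,[::0]);
([::],0,true,[::0;2]);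
([::3],2,false,[::0;2]);
([::],2,true,[::0;2]);
([::0;3;3;3],2,false,[::2]);
([::],0,true,[::0;2;0]);
([::0;3;3;3],2,false,[::2;0]);
([::],0,true,[::0;2;0;0]);
([::0;3;3;3],2,false,[::2;0;0]);
([::],0,true,[::0;2;0;0;0]);
([::3],2,true,[::0;2;2]);
([::],2,true,[::0;2;2]);
([::0;2;2;1],0,false,[::]);
([::3],2,true,[::0;2;2;0]);
([::],2,true,[::0;2;2;0]);
([::1;1;1],0,false,[::0;2;2;0;0]);
([::3],2,true,[::0;2;2;0;0]);
([::],2,true,[::0;2;2;0;0]);
([::0;0;3],2,false,[::0;0;0]);
([::0;0;0;3],2,false,[::0;0]);
([::0;3],2,false,[::0;2]);
([::0],2,true,[::0;2]);
([::0;0;3;3;3],2,false,[::2]);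
([::],2,true,[::0;0;2;0]);
([::0;0;3;3;3],2,false,[::2;0]);
([::],2,true,[::0;0;2;0;0]);
([::0;0;3;3;3],2,false,[::2;0;0]);
([::],2,true,[::0;0;2;0;0;0]);
([::0;3],2,true,[::0;2;2]);
([::0],2,true,[::0;2;2]);
([::0;0;2;2;1],0,false,[::]);
([::0;3],2,true,[::0;2;2;0]);
([::0],2,true,[::0;2;2;0]);
([::0;0;3],2,false,[::0;2]);
([::0;0],2,true,[::0;2]);
([::0],2,true,[::0;0;2;0]);
([::0],2,true,[::0;0;2;0;0]);
([::0;0;3],2,true,[::0;2;2]);
([::0;0],2,true,[::0;2;2]);
([::0;0;0;2;2;1],0,false,[::]);
([::0;0;0;2;2;2;1],0,false,[::]);
([::],0,true,[::2;1;2]);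
([::],0,true,[::2;1;2;0]);
([::1],0,false,[::2;1;2;0;0]);
([::],0,true,[::2;1;2;0;0]);
([::2],0,true,[::1;2;0;0;0]);
([::0;2;1;2;1],0,false,[::]);
([::1;1;1],0,false,[::0;2;1;2;0;0]);
([::0;0;2;1;2;1],0,false,[::]);
([::0;0;0;2;1;2;1],0,false,[::]);
([::1],0,false,[::3;0;3]);
([::3;0;3;1],0,false,[::]);
([::1],0,false,[::3;0;3;0]);
([::1],0,false,[::3;0;3;0;0]);
([::0;3;0;3;1],0,false,[::]);
([::0;0;3;0;3;1],0,false,[::]);
([::0;0;0;3;0;3;1],0,false,[::]);
([::],0,true,[::2;0;0;2]);
([::3;3;3],2,true,[::2;0;0;2]);
([::3;3],2,true,[::2;0;0;2]);
([::],0,true,[::0;2;0;0;2]);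
([::0;3;3;3],2,true,[::2;0;0;2]);
([::0;3;3],2,true,[::2;0;0;2]);
([::0;3],2,true,[::2;0;0;2]);
([::],0,true,[::0;0;2;0;0;2]);
([::0;0;3;3;3],2,true,[::2;0;0;2]);
([::0;0;3;3],2,true,[::2;0;0;2]);
([::],0,true,[::0;0;0;2;0;0;2]);
([::1],0,false,[::3;1;1;3]);
([::3;1;3;3],2,false,[::1;3]);
([::1],0,false,[::3;1;1;3;3;1;1;3]);
([::3;1;3;3],2,false,[::1;3;3;1;1;3]);
([::3;1;1;3;1;1;1],0,false,[::3;1;1;3]);
([::3;1;1;3;3;1;3;3;3;3],2,false,[::1;3]);
([::3],2,false,[::1]);
([::1;3],2,false,[::]);
([::1;1],0,false,[::3]);
([::3;1;1],0,false,[::]);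
([::1],0,false,[::3;0]);
([::0;3;1],0,false,[::]);
([::1],0,false,[::3;0;0]);
([::1;1;1],0,false,[::0;3;0]);
([::0;3;1;1;1],0,false,[::0]);
([::0;0;3;1],0,false,[::]);
([::1;1;1],0,false,[::0;3;0;0]);
([::1;3;3;3],2,false,[::2]);
([::0;0;0],2,true,[::0;2]);
([::3;3;1],0,false,[::]);
([::1;3;3;3],2,false,[::2;0]);
([::0;0;0],2,true,[::0;2;0]);
([::1;3;3;3],2,false,[::2;0;0]);
([::0;0;3;3],2,true,[::0;0;2;0;0]);
([::0;0;3],2,true,[::0;0;2;0;0]);
([::0;0],2,true,[::0;0;2;0;0]);
([::1;3;3],2,false,[::2;0;0;0]);
([::1;3;3],2,false,[::0;0;0]);
([::1;2;0;0;3;3],2,true,[::0]);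
([::1;2;0;0;3],2,true,[::0]);
([::0;0;3;3],2,true,[::0;0;2;0;0;0]);
([::0;0;3],2,true,[::0;0;2;0;0;0]);
([::0;0],2,true,[::0;0;2;0;0;0]);
([::0;0;0;3],2,true,[::0;2;2]);
([::0;0;0],2,true,[::0;2;2]);
([::0;0;0;3],2,true,[::0;2;2;0]);
([::0;0;0],2,true,[::0;2;2;0]);
([::1;2;1],0,true,[::2;0;0]);
([::1;2],0,true,[::2;0;0]);
([::0;0;0;3],2,true,[::0;2;2;0;0]);
([::0;0;0],2,true,[::0;2;2;0;0]);
([::1;1],0,true,[::2;0;0;0;2;0;0]);
([::1;1],0,true,[::2;0;0;0;0;2;0;0]);
([::0;0;0;0],2,true,[::0;2]);
([::3;1;1;1],0,false,[::0;2]);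
([::0;0;0],2,true,[::0;0;2;0]);
([::0;0;0],2,true,[::0;0;2;0;0]);
([::0;0;0],2,true,[::0;0;2;0;0;0]);
([::2;1],0,true,[::2;2;0;2;2]);
([::2],0,true,[::2;2;0;2;2]);
([::2;2;1],0,true,[::2;2;0;2;2]);
([::2;2],0,true,[::2;2;0;2;2]);
([::0;3;1;1;1],0,false,[::0;2]);
([::],2,true,[::0;2;2;2;2;0;2]);
([::2;2;2],0,true,[::2;0;0;2;0]);
([::3;3],2,false,[::0;2;2;2;0;2;2]);
([::3],2,true,[::0;2;2;2;0;2;2]);
([::],2,true,[::0;2;2;2;0;2;2]);
([::0;2;2;1;1],0,false,[::2;2;0;2;2]);
([::0;2;2;1],0,true,[::2;2;0;2;2]);
([::0;2;2],0,true,[::2;2;0;2;2]);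
([::0],2,true,[::0;3;0;2]);
([::0;0;3;1;1],0,false,[::0;2]);
([::0],2,true,[::0;2;2;2;2;0;2]);
([::0;2;2;2;1;1],0,true,[::2;0;0;2;0]);
([::0;2;2;2],0,true,[::2;0;0;2;0]);
([::0;3],2,true,[::0;2;2;2;0;2;2]);
([::0],2,true,[::0;2;2;2;0;2;2]);
([::0;0;2;2;1],0,true,[::2;2;0;2;2]);
([::0;0;2;2],0,true,[::2;2;0;2;2]);
([::],0,true,[::2;0;0;0;2;0;0;0]);
([::1],0,false,[::3;0;3;1]);
([::0;0;3],2,true,[::0;0;0;0;2;0;0;2]);
([::0;0;3],2,true,[::0;0;0;0;0;2;0;0;2]);
([::0;0;0;3;3],2,true,[::0;0;0;0;2;0;0;2]);
([::0;0;0;3],2,true,[::0;0;0;0;2;0;0;2]);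
([::1],0,false,[::3;1]);
([::3;1;3;3],2,false,[::]);
([::3;3],2,false,[::1;3]);
([::1;3;3],2,false,[::1;3]);
([::1;3;3;1],0,false,[::]);
([::0;0],2,true,[::0;2;2;2;0;2;2]);
([::0;0;0;2;2],0,true,[::2;2;0;2;2]);
([::0;0;0;2;2;2],0,true,[::2;0;0;2;0])]%N.

Definition stepsVg : seq step := [::
([::1],0,false,[::2]);
([::],0,true,[::2]);
([::3;3;3;3],2,false,[::2]);
([::3],2,true,[::2]);
([::],2,true,[::2]);
([::2;1],0,false,[::]);
([::2],0,true,[::]);
([::1],0,false,[::2;0]);
([::],0,true,[::2;0]);
([::3;3;3;3],2,false,[::2;0]);
([::3],2,true,[::2;0]);
([::],2,true,[::2;0]);
([::2;1;1;1],0,false,[::0]);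
([::2],0,true,[::0]);
([::2;1;1;1],0,false,[::]);
([::2;0;3;3],2,false,[::]);
([::1],0,false,[::2;0;0]);
([::],0,true,[::2;0;0]);
([::3;3],2,false,[::2;0;0]);
([::3],2,true,[::2;0;0]);
([::],2,true,[::2;0;0]);
([::3;3;3],2,false,[::0;0]);
([::2;0;3;3],2,false,[::0]);
([::1],0,false,[::2;0;0;0]);
([::],0,true,[::2;0;0;0]);
([::3;3],2,false,[::2;0;0;0]);
([::3],2,true,[::2;0;0;0]);
([::],2,true,[::2;0;0;0]);
([::3;3],2,false,[::0;0;0]);
([::2;0;3;3],2,false,[::0;0]);
([::1],0,false,[::2;2]);
([::],0,true,[::2;2]);
([::2;2;1],0,false,[::]);
([::2;2],0,true,[::]);
([::1],0,false,[::2;2;0]);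
([::],0,true,[::2;2;0]);
([::2;2;1;1;1],0,false,[::0]);
([::2;2;1;1;1],0,false,[::]);
([::1],0,false,[::2;2;0;0]);
([::],0,true,[::2;2;0;0]);
([::1],0,false,[::2;2;0;0;0]);
([::],0,true,[::2;2;0;0;0]);
([::1],0,false,[::2;2;2]);
([::],0,true,[::2;2;2]);
([::2;2;2;1],0,false,[::]);
([::2;2;2],0,true,[::]);
([::1],0,false,[::2;2;2;0]);
([::],0,true,[::2;2;2;0]);
([::1],0,false,[::2;2;2;0;0]);
([::],0,true,[::2;2;2;0;0]);
([::1],0,false,[::2;2;2;0;0;0]);
([::],0,true,[::2;2;2;0;0;0]);
([::1;1;1],0,false,[::0;2]);
([::],0,true,[::0;2]);
([::3],2,false,[::0;2]);
([::],2,true,[::0;2]);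
([::1;1;1],0,false,[::2]);
([::0;3;3;3;3],2,false,[::2]);
([::0;3],2,true,[::2]);
([::0;2;1;1],0,false,[::]);
([::1;1;1;1],0,false,[::0;2;0]);
([::],0,true,[::0;2;0]);
([::3;3;3;3],2,false,[::0;2;0]);
([::],2,true,[::0;2;0]);
([::0;3;3;3;3],2,false,[::2;0]);
([::0;3],2,true,[::2;0]);
([::0],2,true,[::2;0]);
([::1;1;1;1],0,false,[::0;2;0;0]);
([::],0,true,[::0;2;0;0]);
([::0;3;3],2,false,[::2;0;0]);
([::0;3],2,true,[::2;0;0]);
([::1;1;1;1],0,false,[::0;2;0;0;0]);
([::],0,true,[::0;2;0;0;0]);
([::1;1;1],0,false,[::0;2;2]);
([::],0,true,[::0;2;2]);
([::0;2;2;1],0,false,[::]);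
([::0;2;2],0,true,[::]);
([::1;1;1],0,false,[::0;2;2;0]);
([::3],2,false,[::0;2;2;0]);
([::1;1;1],0,false,[::2;2;0]);
([::0;2;1;1],0,false,[::2;0]);
([::0;2;2;1;1;1],0,false,[::0]);
([::0;2;2;1;1;1],0,false,[::]);
([::0;2;2;0;3;3;3],2,false,[::]);
([::1;1;1],0,false,[::0;2;2;0;0]);
([::3],2,false,[::0;2;2;0;0]);
([::0;2;1;1],0,false,[::2;0;0]);
([::0;2;2;0;3;3;3],2,false,[::0]);
([::1;1;1],0,false,[::0;2;2;0;0;0]);
([::],0,true,[::0;2;2;2]);
([::0;2;2;2;1],0,false,[::]);
([::0;2;2;2],0,true,[::]);
([::1;1;1],0,false,[::0;2;2;2;0]);
([::1;1;1],0,false,[::2;2;2;0]);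
([::0;2;2;2;1;1;1],0,false,[::0]);
([::0;2;2;2;1;1;1],0,false,[::]);
([::1;1;1],0,false,[::0;2;2;2;0;0]);
([::1;1;1],0,false,[::0;2;2;2;0;0;0]);
([::],0,true,[::0;0;2]);
([::0;3],2,false,[::0;2]);
([::0],2,true,[::0;2]);
([::0;0;3;3],2,false,[::2]);
([::0;0;3],2,true,[::2]);
([::0;0],2,true,[::2]);
([::0;0;2;1;1],0,false,[::]);
([::0;0;3;3;3],2,false,[::]);
([::],0,true,[::0;0;2;0]);
([::0;3;3;3;3],2,false,[::0;2;0]);
([::0],2,true,[::0;2;0]);
([::0;0;3;3],2,false,[::2;0]);
([::0;0;3],2,true,[::2;0]);
([::0;0],2,true,[::2;0]);
([::0;0;3;3;3],2,false,[::0]);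
([::],0,true,[::0;0;2;0;0]);
([::],0,true,[::0;0;2;0;0;0]);
([::],0,true,[::0;0;2;2]);
([::0;0;2;2;1],0,false,[::]);
([::0;0;2;2],0,true,[::]);
([::0;3],2,false,[::0;2;2;0]);
([::0;0;2;1;1],0,false,[::2;0]);
([::0;0;2;2;1;1;1],0,false,[::0]);
([::0;3],2,false,[::0;2;2;0;0]);
([::0;0;2;1;1],0,false,[::2;0;0]);
([::],0,true,[::0;0;2;2;2]);
([::0;0;2;2;2;1],0,false,[::]);
([::0;0;2;2;2],0,true,[::]);
([::0;0;2;2;2;1;1;1],0,false,[::0]);
([::0;0;2;2;2;1;1;1],0,false,[::]);
([::0;0;3],2,false,[::0;2]);
([::0;0],2,true,[::0;2]);
([::0;0;0;3;3],2,false,[::2]);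
([::0;0;0;3],2,true,[::2]);
([::0;0;0],2,true,[::2]);
([::0;0;0;2;1;1],0,false,[::]);
([::0;0;0;3;3],2,false,[::]);
([::0;0;3;3;3;3],2,false,[::0;2;0]);
([::0;0],2,true,[::0;2;0]);
([::0;0;0;2;2;1],0,false,[::]);
([::0;0;0;2;2],0,true,[::]);
([::0;0;3],2,false,[::0;2;2;0]);
([::0;0;0;2;1;1],0,false,[::2;0]);
([::0;0;0;2;2;1;1;1],0,false,[::0]);
([::0;0;3],2,false,[::0;2;2;0;0]);
([::0;0;0;2;2;2;1],0,false,[::]);
([::0;0;0;2;2;2],0,true,[::]);
([::0;0;0;2;2;2;1;1;1],0,false,[::0]);
([::1],0,false,[::]);
([::],0,true,[::]);
([::1;1;1],0,false,[::0]);
([::],0,true,[::0]);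
([::1;1;1],0,false,[::]);
([::],0,true,[::0;0]);
([::3;3;3],2,false,[::0;0;0]);
([::1],0,false,[::0;2;0;0;2;0;2]);
([::],0,true,[::0;2;0;0;2;0;2]);
([::3],2,true,[::0;2;0;0;2;0;2]);
([::1],0,false,[::2;0;0;2;0;2]);
([::0;2;0;3;3;3],2,false,[::0;2;0;2]);
([::0;2;0;0;3],2,false,[::2;0;2]);
([::0;2;0;0],2,true,[::2;0;2]);
([::0;2;0;0;2;1;1;1;1],0,false,[::0;2]);
([::0;2;0;0;3],2,false,[::0;2]);
([::0;2;0;0;2;0;2;1;1;1],0,false,[::]);
([::1],0,false,[::0;2;0;0;2;0;2;0]);
([::],0,true,[::0;2;0;0;2;0;2;0]);
([::1],0,false,[::2;0;0;2;0;2;0]);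
([::0;2;0;3;3;3],2,false,[::0;2;0;2;0]);
([::0;2;0;0;2;1;1;1;1],0,false,[::0;2;0]);
([::1],0,false,[::0;2;0;0;2;0;2;0;0]);
([::],0,true,[::0;2;0;0;2;0;2;0;0]);
([::3;3;3;3],2,false,[::0;2;0;0;2;0;2;0;0]);
([::1],0,false,[::2;0;0;2;0;2;0;0]);
([::0;2;0;3;3;3],2,false,[::0;2;0;2;0;0]);
([::0;2;0;0;2;1;1;1;1],0,false,[::0;2;0;0]);
([::1],0,false,[::0;2;0;0;2;0;2;0;0;0]);
([::],0,true,[::0;2;0;0;2;0;2;0;0;0]);
([::3;3;3;3],2,false,[::0;2;0;0;2;0;2;0;0;0]);
([::1],0,false,[::2;0;0;2;0;2;0;0;0]);
([::1],0,false,[::0;2;0;0;2;0;2;2]);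
([::],0,true,[::0;2;0;0;2;0;2;2]);
([::1],0,false,[::2;0;0;2;0;2;2]);
([::0;2;0;3;3;3],2,false,[::0;2;0;2;2]);
([::0;2;0;0;2;0;2;2;1],0,false,[::]);
([::0;2;0;0;2;0;2;2],0,true,[::]);
([::1],0,false,[::0;2;0;0;2;0;2;2;0]);
([::],0,true,[::0;2;0;0;2;0;2;2;0]);
([::1],0,false,[::2;0;0;2;0;2;2;0]);
([::0;2;0;3;3;3],2,false,[::0;2;0;2;2;0]);
([::0;2;0;0;2;0;2;2;1;1;1],0,false,[::0]);
([::1],0,false,[::0;2;0;0;2;0;2;2;0;0]);
([::],0,true,[::0;2;0;0;2;0;2;2;0;0]);
([::1],0,false,[::2;0;0;2;0;2;2;0;0]);
([::0;2;0;3;3;3],2,false,[::0;2;0;2;2;0;0]);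
([::1],0,false,[::0;2;0;0;2;0;2;2;0;0;0]);
([::],0,true,[::0;2;0;0;2;0;2;2;0;0;0]);
([::1],0,false,[::2;0;0;2;0;2;2;0;0;0]);
([::0;2;0;3;3;3],2,false,[::0;2;0;2;2;0;0;0]);
([::1],0,false,[::0;2;0;0;2;0;2;2;2]);
([::],0,true,[::0;2;0;0;2;0;2;2;2]);
([::1],0,false,[::2;0;0;2;0;2;2;2]);
([::0;2;0;3;3;3],2,false,[::0;2;0;2;2;2]);
([::0;2;0;0;2;0;2;2;2;1],0,false,[::]);
([::0;2;0;0;2;0;2;2;2],0,true,[::]);
([::1],0,false,[::0;2;0;0;2;0;2;2;2;0]);
([::],0,true,[::0;2;0;0;2;0;2;2;2;0]);
([::1],0,false,[::2;0;0;2;0;2;2;2;0]);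
([::0;2;0;0;2;0;2;2;2;1;1;1],0,false,[::0]);
([::1],0,false,[::0;2;0;0;2;0;2;2;2;0;0]);
([::],0,true,[::0;2;0;0;2;0;2;2;2;0;0]);
([::1],0,false,[::2;0;0;2;0;2;2;2;0;0]);
([::1],0,false,[::0;2;0;0;2;0;2;2;2;0;0;0]);
([::],0,true,[::0;2;0;0;2;0;2;2;2;0;0;0]);
([::1],0,false,[::2;0;0;2;0;2;2;2;0;0;0]);
([::],0,true,[::0;2;0;0;2;0;0;2]);
([::3],2,false,[::0;2;0;0;2;0;0;2]);
([::],2,true,[::0;2;0;0;2;0;0;2]);
([::0;3],2,true,[::2;0;0;2;0;0;2]);
([::0;2;1;1],0,false,[::0;0;2;0;0;2]);
([::],0,true,[::0;2;0;0;2;0;0;2;0]);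
([::],0,true,[::0;2;0;0;2;0;0;2;0;0]);
([::0;3;3;3;3],2,false,[::2;0;0;2;0;0;2;0;0]);
([::0;2;0;0;2;0;0;2;2;1],0,false,[::]);
([::0;2;0;0;2;0;0;2;2],0,true,[::]);
([::0;2;0;0;2;0;0;2;2;1;1;1],0,false,[::0]);
([::0;2;0;0;2;0;0;2;2;1;1;1],0,false,[::]);
([::0;2;0;0;2;0;0;2;2;2;1],0,false,[::]);
([::0;2;0;0;2;0;0;2;2;2],0,true,[::]);
([::0;3],2,false,[::2;0;0;2;0;0;0;2]);
([::0],2,true,[::2;0;0;2;0;0;0;2]);
([::0;3],2,false,[::0;0;2;0;0;0;2]);
([::0;2;0;0;2;0;0;0;3],2,true,[::2]);
([::0;2;0;0;2;0;0;0;2;2;1],0,false,[::]);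
([::0;2;0;0;2;0;0;0;2;2],0,true,[::]);
([::0;2;0;0;2;0;0;0;2;2;1;1;1],0,false,[::0]);
([::0;2;0;0;2;0;0;0;2;2;2;1],0,false,[::]);
([::0;2;0;0;2;0;0;0;2;2;2],0,true,[::]);
([::0;2;0;0;2;0;0;0;2;2;2;1;1;1],0,false,[::0]);
([::0;2;0;0;2;0;0;0;3],2,false,[::0;2]);
([::0;2;0;0;2;0;0;0],2,true,[::0;2]);
([::0;2;0;0;2;0;0;0;0;3;3;3;3],2,false,[::2]);
([::0;2;0;0;2;0;0;0;0;3],2,true,[::2]);
([::0;2;0;0;2;0;0;0;0;2;1;1],0,false,[::]);
([::0;2;0;0;2;0;0;0;0;2;2;1],0,false,[::]);
([::0;2;0;0;2;0;0;0;0;2;2],0,true,[::]);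
([::0;2;0;0;2;0;0;0;0;2;2;1;1;1],0,false,[::0]);
([::0;2;0;0;2;0;0;0;0;2;2;2;1],0,false,[::]);
([::0;2;0;0;2;0;0;0;0;2;2;2],0,true,[::]);
([::1],0,false,[::0;2;0;0;2;0]);
([::],0,true,[::0;2;0;0;2;0]);
([::1],0,false,[::2;0;0;2;0]);
([::0;3;3;3],2,false,[::2;0;0;2;0]);
([::0;3;3;3],2,false,[::0;0;2;0]);
([::0;2;0;3;3;3],2,false,[::0;2;0]);
([::0;2;0;0;3;3;3],2,false,[::2;0]);
([::0;2;0;0;2;1;1;1;1],0,false,[::0]);
([::0;2;0;0;3;3;3],2,false,[::0]);
([::0;2;0;0;3;3;3],2,false,[::2;0;0]);
([::0;2;0;0;3;3;3],2,false,[::0;0]);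
([::3;3;3;3],2,false,[::0;2;0;0;2;0;0;0]);
([::0;2;0;0;3;3;3],2,false,[::2;0;0;0]);
([::3;3;3;3],2,false,[::0;2;0;0;2;0;0;0;0]);
([::0;3;3;3;3],2,false,[::2;0;0;2;0;0;0;0]);
([::0;2;0;0;2;0;0;0;0;3;3;3;3],2,false,[::]);
([::1],0,false,[::1;3;1;1;3;1;2]);
([::],0,true,[::1;3;1;1;3;1;2]);
([::3;3],2,false,[::1;3;1;1;3;1;2]);
([::3],2,true,[::1;3;1;1;3;1;2]);
([::1;1;1],0,false,[::3;1;1;3;1;2]);
([::1;3],2,false,[::3;1;1;3;1;2]);
([::1],2,true,[::3;1;1;3;1;2]);
([::1;3;3;3],2,false,[::1;1;3;1;2]);
([::1],0,false,[::1;3;1;1;3;1;2;0]);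
([::],0,true,[::1;3;1;1;3;1;2;0]);
([::3;3],2,false,[::1;3;1;1;3;1;2;0]);
([::3],2,true,[::1;3;1;1;3;1;2;0]);
([::],2,true,[::1;3;1;1;3;1;2;0]);
([::1;1;1],0,false,[::3;1;1;3;1;2;0]);
([::1],2,true,[::3;1;1;3;1;2;0]);
([::1;3;1;1;1],0,false,[::1;1;3;1;2;0]);
([::1;3;1;3;3;3],2,false,[::1;3;1;2;0]);
([::1],0,false,[::1;3;1;1;3;1;2;0;0]);
([::3;3],2,false,[::1;3;1;1;3;1;2;0;0]);
([::3],2,true,[::1;3;1;1;3;1;2;0;0]);
([::1;1;1],0,false,[::3;1;1;3;1;2;0;0]);
([::1;3;1;1;3;1;2;0;0;3],2,false,[::]);
([::1],0,false,[::1;3;1;1;3;1;2;0;0;0]);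
([::3;3],2,false,[::1;3;1;1;3;1;2;0;0;0]);
([::3],2,true,[::1;3;1;1;3;1;2;0;0;0]);
([::1;1;1],0,false,[::3;1;1;3;1;2;0;0;0]);
([::1;3;1;1;3;1;2;0;0;3],2,false,[::0]);
([::1],0,false,[::1;3;1;1;3;1;2;2]);
([::],0,true,[::1;3;1;1;3;1;2;2]);
([::1;1;1],0,false,[::3;1;1;3;1;2;2]);
([::1;3;1;1;3;1;2;2;1],0,false,[::]);
([::1;3;1;1;3;1;2;2],0,true,[::]);
([::1;1],0,false,[::1;3;1;1;3;1;2;2;0]);
([::],2,true,[::1;3;1;1;3;1;2;2;0]);
([::1;1;1;1],0,false,[::3;1;1;3;1;2;2;0]);
([::1;3],2,false,[::3;1;1;3;1;2;2;0]);
([::1;3;1;1;3;1;2;2;1;1;1],0,false,[::0]);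
([::1;1],0,false,[::1;3;1;1;3;1;2;2;0;0]);
([::],0,true,[::1;3;1;1;3;1;2;2;0;0]);
([::1;3],2,false,[::3;1;1;3;1;2;2;0;0]);
([::1],0,false,[::1;3;1;1;3;1;2;2;0;0;0]);
([::1;1;1],0,false,[::3;1;1;3;1;2;2;0;0;0]);
([::1],0,false,[::1;3;1;1;3;1;2;2;2]);
([::],0,true,[::1;3;1;1;3;1;2;2;2]);
([::1;1;1],0,false,[::3;1;1;3;1;2;2;2]);
([::1;3;1;1;3;1;2;2;2;1],0,false,[::]);
([::1;3;1;1;3;1;2;2;2],0,true,[::]);
([::1],0,false,[::1;3;1;1;3;1;2;2;2;0]);
([::],0,true,[::1;3;1;1;3;1;2;2;2;0]);
([::1;1;1],0,false,[::3;1;1;3;1;2;2;2;0]);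
([::1;3;1;1;3;1;2;2;2],0,true,[::0]);
([::1],0,false,[::1;3;1;1;3;1;2;2;2;0;0]);
([::],0,true,[::1;3;1;1;3;1;2;2;2;0;0]);
([::1;1;1],0,false,[::3;1;1;3;1;2;2;2;0;0]);
([::1],0,false,[::1;3;1;1;3;1;2;2;2;0;0;0]);
([::],0,true,[::1;3;1;1;3;1;2;2;2;0;0;0]);
([::1;1;1],0,false,[::3;1;1;3;1;2;2;2;0;0;0]);
([::],0,true,[::1;3;1;1;3;1;0;2]);
([::3],2,false,[::1;3;1;1;3;1;0;2]);
([::],2,true,[::1;3;1;1;3;1;0;2]);
([::1;3;1;1],0,false,[::1;1;3;1;0;2]);
([::1;3;1;1;3;3],2,false,[::3;1;0;2]);
([::1;3;1;1;3],2,true,[::3;1;0;2]);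
([::1;3;1;1;3;3;3;3],2,false,[::1;0;2]);
([::],0,true,[::1;3;1;1;3;1;0;2;0]);
([::],2,true,[::1;3;1;1;3;1;0;2;0]);
([::1;3;1;1;3;3],2,false,[::3;1;0;2;0]);
([::1;3;1;1;3],2,true,[::3;1;0;2;0]);
([::1;3;1;1],2,true,[::3;1;0;2;0]);
([::1;3;1;1;3;3;3;3],2,false,[::1;0;2;0]);
([::],2,true,[::1;3;1;1;3;1;0;2;0;0]);
([::1;3;1;1;3;3],2,false,[::3;1;0;2;0;0]);
([::1;3;1;1;3],2,true,[::3;1;0;2;0;0]);
([::1;3;1;1;3;3;3;3],2,false,[::1;0;2;0;0]);
([::],0,true,[::1;3;1;1;3;1;0;2;0;0;0]);
([::],2,true,[::1;3;1;1;3;1;0;2;0;0;0]);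
([::],0,true,[::1;3;1;1;3;1;0;2;2]);
([::3],2,false,[::1;3;1;1;3;1;0;2;2]);
([::1;3;1;1],0,false,[::1;1;3;1;0;2;2]);
([::1;3;1;1;2;1],0,false,[::]);
([::],0,true,[::1;3;1;1;3;1;0;2;2;0]);
([::1;3;1;1;2;1;1;1],0,false,[::0]);
([::1;3;1;1;2],0,true,[::0]);
([::],0,true,[::1;3;1;1;3;1;0;2;2;0;0]);
([::],0,true,[::1;3;1;1;3;1;0;2;2;2]);
([::1;3;1;1;2;2;1],0,false,[::]);
([::1;3;1;1;2;2],0,true,[::]);
([::],0,true,[::1;3;1;1;3;1;0;2;2;2;0]);
([::1;3;1;1;2;2;1;1;1],0,false,[::0]);
([::1;3;1;1;2;2],0,true,[::0]);
([::3],2,false,[::1;3;1;1;3;1;0;2;2;2;0;0]);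
([::],2,true,[::1;3;1;1;3;1;0;2;2;2;0;0]);
([::1;3;1;1;2;1],0,false,[::2;0;0]);
([::1;3;1;1;2],0,true,[::2;0;0]);
([::3],2,false,[::1;3;1;1;3;1;0;2;2;2;0;0;0]);
([::],2,true,[::1;3;1;1;3;1;0;2;2;2;0;0;0]);
([::1;3;1;1;2;1],0,false,[::2;0;0;0]);
([::1;3;1;1;2],0,true,[::2;0;0;0]);
([::],0,true,[::1;3;1;1;3;1;0;0;2]);
([::3;3],2,false,[::1;3;1;1;3;1;0;0;2]);
([::1;3;1;1;3],2,false,[::3;1;0;0;2]);
([::1;3;1;1;3;3;3],2,false,[::1;0;0;2]);
([::1;3;1;1;3;3;3;3],2,false,[::0;2]);
([::1;3;1;1;3;0;3;3],2,false,[::2]);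
([::1;3;1;1;3;0;3],2,true,[::2]);
([::1;3;1;1;3;0],2,true,[::2]);
([::1;3;1;1;3;0;3;3],2,false,[::]);
([::],0,true,[::1;3;1;1;3;1;0;0;2;0]);
([::1;3;1;1;3;0;3;3],2,false,[::2;0]);
([::1;3;1;1;3;0;3],2,true,[::2;0]);
([::1;3;1;1;3;0],2,true,[::2;0]);
([::1;3;1;1;3;0;3;3],2,false,[::0]);
([::],0,true,[::1;3;1;1;3;1;0;0;2;0;0]);
([::1;3;1;1],2,true,[::3;1;0;0;2;0;0]);
([::],0,true,[::1;3;1;1;3;1;0;0;2;0;0;0]);
([::1;3;1;1],2,true,[::3;1;0;0;2;0;0;0]);
([::1;3;1;1;3],2,false,[::3;1;0;0;2;2]);
([::1;3;1;1;3;3;3],2,false,[::1;0;0;2;2]);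
([::1;3;1;1;3;0;2;2;1],0,false,[::]);
([::1;3;1;1;3;0;2;2],0,true,[::]);
([::],0,true,[::1;3;1;1;3;1;0;0;2;2;0]);
([::1;3;1;1;3;0;2;2;1;1;1],0,false,[::0]);
([::1;3;1;1;3;0;2;2],0,true,[::0]);
([::1;3;1;1;3;0;2;2;1;1;1],0,false,[::]);
([::1;3;1;1;3;0;2;2;2;1],0,false,[::]);
([::1;3;1;1;3;0;2;2;2],0,true,[::]);
([::1;3;1;1;3],2,false,[::3;1;0;0;2;2;2;0]);
([::1;3;1;1],2,true,[::3;1;0;0;2;2;2;0]);
([::1;3;1;1;3;0;2;2;1],0,false,[::2;0]);
([::1;3;1;1;3;0;2;2],0,true,[::2;0]);
([::1;3;1;1;3;0;2;2;2;1;1;1],0,false,[::0]);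
([::1;3;1;1;3;0;2;2;2;1;1;1],0,false,[::]);
([::1;3;1;1;3],2,false,[::3;1;0;0;2;2;2;0;0]);
([::1;3;1;1],2,true,[::3;1;0;0;2;2;2;0;0]);
([::1;3;1;1;3;0;2;2;1],0,false,[::2;0;0]);
([::1;3;1;1;3;0;2;2],0,true,[::2;0;0]);
([::1;3;1;1;3;3],2,false,[::3;1;0;0;0;2]);
([::1;3;1;1;3;0;3],2,false,[::0;2]);
([::1;3;1;1;3;0;0;3;3],2,false,[::2]);
([::1;3;1;1;3;0;0;3],2,true,[::2]);
([::1;3;1;1;3;0;0;2;1;1],0,false,[::]);
([::],0,true,[::1;3;1;1;3;1;0;0;0;2;0]);
([::1;3;1;1;3;0;3;3;3;3],2,false,[::0;2;0]);
([::1;3;1;1;3;0],2,true,[::0;2;0]);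
([::],0,true,[::1;3;1;1;3;1;0;0;0;2;0;0]);
([::1;3;1;1;3;0],2,true,[::0;2;0;0]);
([::],2,true,[::1;3;1;1;3;1;0;0;0;2;0;0;0]);
([::1;3;1;1;3;0;0;2;0;0;0],2,true,[::]);
([::1;3;1;1;3;0;3],2,false,[::0;2;2]);
([::1;3;1;1;3;0;0;2;1;1],0,false,[::2]);
([::1;3;1;1;3;0;0;2;2;1],0,false,[::]);
([::1;3;1;1;3;0;0;2;2],0,true,[::]);
([::1;3;1;1;3],2,true,[::3;1;0;0;0;2;2;0]);
([::1;3;1;1],2,true,[::3;1;0;0;0;2;2;0]);
([::1;3;1;1;3;0;0;2;2;1;1;1],0,false,[::0]);
([::1;3;1;1;3;0;0;2;2;1;1;1],0,false,[::]);
([::1;3;1;1;3],2,true,[::3;1;0;0;0;2;2;0;0]);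
([::1;3;1;1;3;0;3],2,false,[::0;2;2;2]);
([::1;3;1;1;3;0],2,true,[::0;2;2;2]);
([::1;3;1;1;3;0;0;2;2;2;1],0,false,[::]);
([::1;3;1;1;3;0;0;2;2;2],0,true,[::]);
([::1;3;1;1;3;0;3],2,false,[::0;2;2;2;0]);
([::1;3;1;1;3;0],2,true,[::0;2;2;2;0]);
([::1;3;1;1;3;0;0;2;2;2;1;1;1],0,false,[::0]);
([::1;3;1;1;3;0;0;2;2;2;1;1;1],0,false,[::]);
([::1;3;1;1;3;0],2,true,[::0;2;2;2;0;0]);
([::1],0,false,[::1;3;1;1;3;1]);
([::],0,true,[::1;3;1;1;3;1]);
([::1;1;1],0,false,[::3;1;1;3;1]);
([::1;3],2,false,[::3;1;1;3;1]);
([::1],2,true,[::3;1;1;3;1]);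
([::1;3;3;3],2,false,[::1;1;3;1]);
([::1;3;1;3;3;3],2,false,[::1;3;1]);
([::1;3;1;1;3],2,false,[::3;1]);
([::1;3;1;1],2,true,[::3;1]);
([::1;3;1;1;3;1;1;1;1],0,false,[::1]);
([::1;3;1;1;3;3;3],2,false,[::1]);
([::],0,true,[::1;3;1;1;3;1;0]);
([::1;3],2,false,[::3;1;1;3;1;0]);
([::1],2,true,[::3;1;1;3;1;0]);
([::1;3;3;3],2,false,[::1;1;3;1;0]);
([::],0,true,[::1;3;1;1;3;1;0;0]);
([::1;3],2,false,[::3;1;1;3;1;0;0]);
([::1],0,false,[::1;3;1;1;3;1;1;3;1;1;3;1]);
([::],0,true,[::1;3;1;1;3;1;1;3;1;1;3;1]);
([::],0,true,[::1;3;1;1;3;1;1;3;1;1;3;1;0]);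
([::1;1;1],0,false,[::1;2]);
([::1;3],2,true,[::2]);
([::1;2;1],0,false,[::]);
([::1;2],0,true,[::]);
([::0;0;3;3],2,false,[::0;0;2]);
([::0;0;0;3],2,false,[::0;2]);
([::0;0;0],2,true,[::0;2]);
([::0;0;0;0;3],2,true,[::2]);
([::0;0;0;0;2;1;1],0,false,[::]);
([::3;3;3;1;1;1],0,false,[::]);
([::1;1],0,false,[::2;2;2;2]);
([::2;2;2;2;1],0,false,[::]);
([::2;2;2;2;2;1],0,false,[::]);
([::1;1],0,false,[::2;1]);
([::2;1;1;1],0,false,[::1]);
([::1;1],0,false,[::2;0;0;0;0]);
([::1;1;1],0,false,[::1;2;0]);
([::1;3],2,true,[::2;0]);
([::1],2,true,[::2;0]);
([::1;2;1;1;1],0,false,[::0]);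
([::1;2],0,true,[::0]);
([::1;2;1;1;1],0,false,[::]);
([::0;3;3;3],2,false,[::0;0;0;2;0]);
([::0;3;3],2,true,[::0;0;0;2;0]);
([::0;3],2,true,[::0;0;0;2;0]);
([::0],2,true,[::0;0;0;2;0]);
([::0;0;3;3],2,false,[::0;0;2;0]);
([::0;0;0;3;3;3;3],2,false,[::0;2;0]);
([::0;0;0],2,true,[::0;2;0]);
([::0;0;0;0;3],2,true,[::2;0]);
([::0;0;0;0],2,true,[::2;0]);
([::1;1],0,false,[::3;3;3;0]);
([::3;1;1;1],0,false,[::3;3;0]);
([::3;3;1;1],0,true,[::3;0]);
([::1],0,true,[::2;2;2;2;0]);
([::1;1],0,false,[::2;2;2;2;2;0]);
([::1],0,true,[::2;2;2;2;2;0]);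
([::2;0;0;3],2,false,[::0;0;0]);
([::1;3],2,true,[::2;0;0]);
([::1;2;0;0;3;3],2,false,[::]);
([::0;3;3;3],2,false,[::0;0;0;2;0;0]);
([::0;3;3],2,true,[::0;0;0;2;0;0]);
([::0;3],2,true,[::0;0;0;2;0;0]);
([::1;1;1],0,false,[::3;0;0]);
([::1;1],0,true,[::3;0;0]);
([::1],0,true,[::3;0;0]);
([::3;0],2,true,[::0]);
([::2;2;2;1],0,true,[::2;0;0]);
([::2;2;2],0,true,[::2;0;0]);
([::2;0;3;1;1;1;1],0,false,[::3;0]);
([::2;0;3;1],0,true,[::3;0]);
([::2;0;3;3;0;3;3],2,false,[::]);
([::1;2;0;0;3;3],2,false,[::0]);
([::1;1],0,true,[::3;0;0;0]);
([::1],0,true,[::3;0;0;0]);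
([::3;0],2,true,[::0;0]);
([::3;0;0;3],2,true,[::0]);
([::3;0;0],2,true,[::0]);
([::3;1;1;1],0,false,[::3;0;0;0]);
([::3;1;1],0,true,[::3;0;0;0]);
([::3;3;0;3],2,true,[::0;0]);
([::3;3;0],2,true,[::0;0]);
([::1;2;2;1],0,false,[::]);
([::0;0;0;3],2,false,[::0;2;2]);
([::0;0;0;0;2;1;1],0,false,[::2]);
([::0;0;0;0;2;2;1],0,false,[::]);
([::1;1],0,false,[::2;2;1]);
([::1;2;1],0,false,[::2;0]);
([::1;2;2;1;1;1],0,false,[::0]);
([::1;2;2;0;3;3],2,false,[::]);
([::1;1],0,false,[::2;2;1;1]);
([::1;2;1],0,false,[::2;0;0]);
([::0;0;0;3],2,false,[::0;2;2;0;0]);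
([::1;2;2;2;1],0,false,[::]);
([::0;0;0;0;2;2;2;1],0,false,[::]);
([::1;1],0,false,[::2;2;2;1]);
([::0;0;0;0;2;2;2;1;1;1],0,false,[::0]);
([::0;0;0;3;3],2,false,[::0;0;2]);
([::0;0;0;0;3],2,false,[::0;2]);
([::0;0;0;0],2,true,[::0;2]);
([::0;0;0;0;0;2;1;1],0,false,[::]);
([::3;3;3],2,false,[::3;0;2]);
([::3;1],0,true,[::0;2]);
([::2;2;1;1],0,true,[::2;2;0;2]);
([::2;2;1],0,true,[::2;2;0;2]);
([::2;2],0,true,[::2;2;0;2]);
([::1;1;1;3;3;3;3],2,false,[::2]);
([::0;3;1;1;1],0,false,[::3;3]);
([::0;3;1;1],0,true,[::3;3]);
([::0;3;1],0,true,[::3;3]);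
([::0;3;3;1;1],0,true,[::3]);
([::0;2;2;2;2;1;1],0,false,[::]);
([::0;2;2;2;2;1],0,true,[::]);
([::0;2;2;2;2],0,true,[::]);
([::1;1;3;3;3],2,false,[::1;2;0]);
([::1;1;3;3],2,true,[::1;2;0]);
([::1;1;3],2,true,[::1;2;0]);
([::1;1],2,true,[::1;2;0]);
([::1;1;1;3],2,true,[::2;0]);
([::0;0;0;0],2,true,[::0;2;0]);
([::3;1],0,true,[::3;3;3;0;2;0]);
([::2;2;1;1],0,true,[::2;2;0;2;0]);
([::2;2;1],0,true,[::2;2;0;2;0]);
([::2;2;2],0,true,[::2;0;2;0]);
([::3;3],2,false,[::0;2;2;2;2;0]);
([::0;2;2;2;1],0,false,[::2;0]);
([::1;1;3;3;3],2,false,[::1;2;0;0]);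
([::1;1;3;3],2,true,[::1;2;0;0]);
([::0;3;0],2,true,[::0]);
([::0;3;0;0;3],2,true,[::]);
([::1;1;1],0,true,[::0;2;2;2;2;0;0]);
([::1;1],0,true,[::0;2;2;2;2;0;0]);
([::0;2;2;2;1],0,false,[::2;0;0]);
([::0;2;2;2],0,true,[::2;0;0]);
([::3],2,false,[::0;2;2;1]);
([::0;2;1;1],0,false,[::2;1]);
([::0;2;2;1;1;1],0,false,[::1]);
([::0;2;2;1;1;1;1;1],0,false,[::]);
([::3;3;3],2,false,[::0;2;2;0;0;0;0]);
([::1],0,false,[::3;0;2;2;0]);
([::3;0;2;2;1],0,false,[::0]);
([::3;0;2;2;1;1],0,false,[::]);
([::1],0,false,[::0;2;1;1;2;0]);
([::0;2;1;1;3;3;3],2,true,[::2;0]);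
([::0;2;1;1;2;1],0,false,[::0]);
([::1;1;2;1],0,false,[::2;0;0;0]);
([::1;1;2;2;1],0,true,[::2;0;0]);
([::0;0;0;0;0;3],2,false,[::0;2]);
([::0;0;0;0;0;0;3;3],2,false,[::2]);
([::0;3;3;3],2,false,[::3;0;2]);
([::0;3;1],0,true,[::0;2]);
([::0;3;3;3;3;3],2,false,[::0;2]);
([::3;3;3;3],2,false,[::0;2;2;2;2;0;2]);
([::0;2;2;1],0,true,[::2;2;0;2]);
([::0;2;2],0,true,[::2;2;0;2]);
([::0;0;3;1;1;1],0,false,[::]);
([::0;0;3;3;3;3],2,false,[::2;1;1]);
([::0;2;2;2],0,true,[::2;0;2;0]);
([::0;0;3;0;3;3],2,false,[::]);
([::0;0;3;0;3],2,true,[::]);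
([::0;0;3;0],2,true,[::]);
([::0;3],2,false,[::0;2;2;1]);
([::0;3;1;1],0,true,[::0;2;2;0]);
([::0;3;1],0,true,[::0;2;2;0]);
([::0;3;0;2;2;1;1;1],0,false,[::0]);
([::0;3;0;2;2;1;1;1],0,false,[::]);
([::0;0;3;3;3;3],2,false,[::2;1;1;2;0]);
([::0;0;3;3;3],2,true,[::2;1;1;2;0]);
([::0;0;3;3],2,true,[::2;1;1;2;0]);
([::0;3;1;1],0,true,[::0;2;2;0;0]);
([::0;3;0;3;3;3;3],2,false,[::2;2;0;0]);
([::0;3;0;3;3;3],2,true,[::2;2;0;0]);
([::0;3;0;3;3],2,true,[::2;2;0;0]);
([::0;0;2;2;2;1;3;3;3],2,true,[::]);
([::0;0;2;2;2;1;3;3],2,true,[::]);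
([::0;0;3;1;1;1;1],0,false,[::0;2]);
([::0;0;2;2;1;1],0,true,[::2;2;0;2]);
([::0;0;2;2;1],0,true,[::2;2;0;2]);
([::0;0;2;2],0,true,[::2;2;0;2]);
([::0;0;2;2;2;1;1],0,true,[::2;0;2]);
([::0],2,true,[::0;0;3]);
([::0;0;0;2;1;3;3;3],2,false,[::1]);
([::0;0;0;2;1;3;3],2,true,[::1]);
([::0;0;0;2;1;1;3;3;3],2,true,[::]);
([::0;0;0;2;1;1;3;3],2,true,[::]);
([::0;0;0;3;1;1;1],0,false,[::3]);
([::0;0;0;3;1;1],0,true,[::3]);
([::0;0;0;3;1],0,true,[::3]);
([::0;0;2;2;2;1;1],0,true,[::2;0;2;0]);
([::0;0;2;2;2;1],0,true,[::2;0;2;0]);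
([::0;0;2;2;2],0,true,[::2;0;2;0]);
([::0;0;2;2;2;2;1;1],0,true,[::0;2;0]);
([::0;0;3;1;1;1;1],0,false,[::0;2;2;0]);
([::0;0;3;1;1;1],0,true,[::0;2;2;0]);
([::0;0;3;1;1],0,true,[::0;2;2;0]);
([::0;0;3;1],0,true,[::0;2;2;0]);
([::0;0;3;0;3;3;3],2,true,[::2;2;0]);
([::0;0;3;0;3;3],2,true,[::2;2;0]);
([::0;0;3;0;2;2;1;1;1],0,false,[::0]);
([::0;0;3;1;1;1],0,true,[::0;2;2;0;0]);
([::0;0;3;1;1],0,true,[::0;2;2;0;0]);
([::0;0;3],2,true,[::0;2;2;2;1]);
([::0;0],2,true,[::0;2;2;2;1]);
([::1;3;3;3],2,false,[::1]);
([::1;3;3;3],2,false,[::1;1]);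
([::1;1;3;3;3],2,false,[::1]);
([::2;1],0,true,[::0;0;2;0;2]);
([::2;0;0;3],2,false,[::2;0;2]);
([::2;0;0;3],2,false,[::0;2]);
([::2;0;0;2;0;2;1;1;1],0,false,[::]);
([::0;0;0;3],2,false,[::0;0;2;0;0;2;0;2]);
([::0;0;0;0;0;2;0;0;3;3],2,false,[::2;0;2]);
([::1;1],0,false,[::2;2;2;0;2;0;0;2;0;2]);
([::1;2;0;0;3],2,false,[::2;0;2]);
([::1;2;0;0;3],2,false,[::0;2]);
([::0;2;0;3;3;3;1],0,true,[::0;2;0;2]);
([::0;2;0;0;3;3;3],2,false,[::0;2]);
([::0;2;0;3;3;1;1;1],0,false,[::3;0;2;0;2;0]);
([::3;1;1;1;1],0,false,[::3;3;3;0;2;0;0;2;0;2;0;0]);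
([::3;3;1;1;1;1],0,false,[::3;3;0;2;0;0;2;0;2;0;0]);
([::3;3;1;1;1],0,true,[::3;3;0;2;0;0;2;0;2;0;0]);
([::3;3;1;1],0,true,[::3;3;0;2;0;0;2;0;2;0;0]);
([::3;3;3;3],2,false,[::2;0;0;2;0;2;0;0;0]);
([::3;1;1;1;1],0,false,[::3;3;3;0;2;0;0;2;0;2;0;0;0]);
([::3;3;1;1;1;1],0,false,[::3;3;0;2;0;0;2;0;2;0;0;0]);
([::3;3;1;1;1],0,true,[::3;3;0;2;0;0;2;0;2;0;0;0]);
([::3;3;1;1],0,true,[::3;3;0;2;0;0;2;0;2;0;0;0]);
([::2;0;0;2;0;2;2;1],0,false,[::]);
([::2;0;0;2;0;2;2],0,true,[::]);
([::0;0;0;0;0;2;0;0;2;0;2;2;1],0,false,[::]);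
([::1;2;0;0;2;0;2;2;1],0,false,[::]);
([::0;2;0;3;3;3;0;2;0;2;2;1],0,false,[::]);
([::2;0;0;2;0;2;2;1;1;1],0,false,[::0]);
([::1;2;0;0;2;0;2;2;1;1;1],0,false,[::0]);
([::0;2;0;3;3;3;0;2;0;2;2;1;1;1],0,false,[::0]);
([::3;3;3;3],2,false,[::2;0;0;2;0;2;2;0;0;0]);
([::3;3;3],2,true,[::2;0;0;2;0;2;2;0;0;0]);
([::2;0;0;2;0;2;2;2;1],0,false,[::]);
([::0;0;0;0;0;2;0;0;2;0;2;2;2;1],0,false,[::]);
([::1;2;0;0;2;0;2;2;2;1],0,false,[::]);
([::2;0;0;2;0;2;2;2;1;1;1],0,false,[::0]);
([::0;3;3;1;1;1;1],0,false,[::3;0;0;2;0;0;2;0;0]);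
([::0;3;3;1;1;1],0,true,[::3;0;0;2;0;0;2;0;0]);
([::0;3;3;1;1],0,true,[::3;0;0;2;0;0;2;0;0]);
([::0;0;0;2;0;0;0;3;3;3],2,true,[::2]);
([::0;3;0;3;3;3;3],2,false,[::0;2;0;0;0;2]);
([::0;2;0;0;2;0;0;0;3;0;3;3;3;3],2,false,[::2]);
([::0;2;0;0;2;0;0;0;0;3;1;1;1;1],0,false,[::3;3]);
([::0;2;0;0;2;0;0;0;0;3;1;1;1],0,true,[::3;3]);
([::0;2;0;0;2;0;0;0;0;3;1;1],0,true,[::3;3]);
([::0;2;0;0;2;0;0;0;0;3;1],0,true,[::3;3]);
([::0;2;0;0;2;0;0;0;0;3;3;1;1;1],0,true,[::3]);
([::0;2;0;0;2;0;0;0;0;3;3;3;1;1;1],0,false,[::]);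
([::0;2;0;0;2;0;0;0;0;2;2;1;3;3;3;3],2,false,[::]);
([::0;2;0;0;2;0;0;0;0;2;2;1;3;3;3],2,true,[::]);
([::0;2;0;0;2;0;0;0;0;2;2;2;1;3;3;3],2,true,[::]);
([::1;3;3;3],2,false,[::2;0;0;2;0]);
([::1;3;3;3],2,false,[::0;0;2;0]);
([::1;1;1],0,false,[::0;3;3;0;0;2;0]);
([::1],0,true,[::0;3;3;0;0;2;0]);
([::1;1;1],0,false,[::3;3;0;0;2;0]);
([::0;3;3;0;3;3;3;3],2,false,[::0;2;0]);
([::1;1;1],0,false,[::0;3;3;3;0;0;2;0]);
([::1],0,true,[::0;3;3;3;0;0;2;0]);
([::1;1;1],0,false,[::3;3;3;0;0;2;0]);
([::0;2;0;3;1;1;1],0,false,[::3;3;0;2;0]);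
([::0;2;0;3],0,true,[::3;3;0;2;0]);
([::0;2;0;0;3;3;1;1;1;1],0,false,[::0]);
([::0;2;0;0;3;3;1],0,true,[::0]);
([::3;3;3],2,false,[::0;2;0;0;2;1;1;1]);
([::0;2;1;1;1;1],0,false,[::0;0;2;1;1;1]);
([::0;2;0;0;3;3;3;3],2,false,[::2;1;1;1]);
([::0;2;0;0;2;1;3;3;3],2,false,[::1;1]);
([::0;2;0;0;3;3;3;1;1;1],0,false,[::0]);
([::3;1;1;1],0,true,[::3;3;3;0;2;0;0;2;0;0;0]);
([::3;3;3;1;1;1],0,false,[::3;0;2;0;0;2;0;0;0]);
([::3;3;3],2,true,[::0;2;0;0;3;3;0;0;0]);
([::0;2;0;0;3;1;1;1],0,true,[::3;0;0;0]);
([::3;1;1;1],0,true,[::3;3;3;0;2;0;0;2;0;0;0;0]);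
([::0;3;3;3;1;1;1],0,true,[::0;0;2;0;0;0;0]);
([::1;3;3],2,false,[::1;3;1;1;3;1;2]);
([::1;1;3],2,false,[::3;1;1;3;1;2]);
([::1;1;3;1;1;1],0,false,[::1;1;3;1;2]);
([::0;3;3],2,false,[::0;0;3;1;1;3;1;2]);
([::0;3],2,true,[::0;0;3;1;1;3;1;2]);
([::0;0;0;3;1;1],0,false,[::1;1;3;1;2]);
([::0;0;0;3;1],0,true,[::1;1;3;1;2]);
([::1;1],0,false,[::3;3;1;3;1;1;3;1;2]);
([::3;1],0,false,[::3;1;3;1;1;3;1;2]);
([::3],0,true,[::3;1;3;1;1;3;1;2]);
([::3;3;1;3;3],2,false,[::3;1;1;3;1;2]);
([::3;3;1;3;3;3;3],2,false,[::1;1;3;1;2]);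
([::3;3;1;3;1;1;3;1;2;1;1;1;1],0,false,[::]);
([::2;2;2;1;3],2,false,[::3;1;1;3;1;2]);
([::1;1;3;3;3],2,false,[::1;3;1;1;3;1;2]);
([::1;1;1;3],2,false,[::3;1;1;3;1;2]);
([::1;1;1;3;3;3],2,false,[::1;1;3;1;2]);
([::3;3;3],2,false,[::1;3;3;1;1;3;1;2]);
([::1;2;2;1;1],0,false,[::2;1;1;3;1;2]);
([::1],2,true,[::1;3;1;1;3;1;2;0]);
([::0;3;3],2,false,[::0;0;3;1;1;3;1;2;0]);
([::0;3],2,true,[::0;0;3;1;1;3;1;2;0]);
([::0],2,true,[::0;0;3;1;1;3;1;2;0]);
([::1;1],0,false,[::3;3;1;3;1;1;3;1;2;0]);
([::1],0,true,[::3;3;1;3;1;1;3;1;2;0]);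
([::1;1],0,false,[::2;2;2;1;3;1;1;3;1;2;0]);
([::1],0,true,[::2;2;2;1;3;1;1;3;1;2;0]);
([::2;1],0,false,[::2;2;1;3;1;1;3;1;2;0]);
([::1;2;2;1;1],0,false,[::2;1;1;3;1;2;0]);
([::1;2;2;1],0,true,[::2;1;1;3;1;2;0]);
([::2;1],0,false,[::2;2;1;3;1;1;3;1;2;0;0]);
([::1;3;3],2,false,[::1;1;3;1;1;3;1;2;0;0]);
([::1;1;3;3],2,false,[::1;3;1;1;3;1;2;0;0]);
([::1;1;3],2,true,[::1;3;1;1;3;1;2;0;0]);
([::1;1;1;3;1;1;1],0,false,[::1;1;3;1;2;0;0]);
([::1;3;1;1;3;1;2;0;0;3;1;1],0,false,[::]);
([::1;1;3;1;1;3;1;2;0;0;0;3;3],2,false,[::]);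
([::1;3;3],2,false,[::1;1;3;1;1;3;1;2;0;0;0]);
([::1;3;1;1;3;1;2;0;0;3;0;3;3],2,false,[::]);
([::1;3;1;1;3;1;2;0;0;3;0;3],2,true,[::]);
([::1;3;1;1;3;1;2;0;0;3;0],2,true,[::]);
([::0;0;0;3;3],2,false,[::3;1;1;3;1;2;2]);
([::1;1;1;3;1;1;3;1;2;2;1],0,false,[::]);
([::1;3;3],2,false,[::3;1;1;3;1;2;2;1]);
([::1;1;1;3;1;1;3;1;2;2;1;1;1],0,false,[::0]);
([::1;3;3;1;1;1],0,true,[::1;1;3;1;2;2;0]);
([::0;0;0;3;1;1],0,true,[::1;1;3;1;2;2;0;0]);
([::0;0;0;3;1;1;3;1;2;2;0;0;3],2,true,[::]);
([::1;1;3;1;1;3;1;2;2;0;0;3],2,true,[::0]);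
([::1;1;3],2,false,[::3;1;1;3;1;2;2;2]);
([::1;1],2,true,[::3;1;1;3;1;2;2;2]);
([::1;1;3;1;1;3;1;2;2;1],0,false,[::2]);
([::1;1;3;1;1;3;1;2;2],0,true,[::2]);
([::1;1;3;1;1;3;1;2;2;2;1],0,false,[::]);
([::0;0;0;3],2,false,[::3;1;1;3;1;2;2;2]);
([::0;0;0],2,true,[::3;1;1;3;1;2;2;2]);
([::0;0;0;3;1;1;3;1;2;2;1],0,false,[::2]);
([::0;0;0;3;1;1;3;1;2;2],0,true,[::2]);
([::0;0;0;3;1;1;3;1;2;2;2;1],0,false,[::]);
([::1;1;1;3;1;1;3;1;2;2;2;1],0,false,[::]);
([::1;3],2,false,[::3;1;1;3;1;2;2;2;1]);
([::1],2,true,[::3;1;1;3;1;2;2;2;1]);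
([::1;3;1;1;3;1;2;2;1],0,false,[::2;1]);
([::1;3;1;1;3;1;2;2],0,true,[::2;1]);
([::1;1;3;3],2,false,[::3;1;1;3;1;2;2;2;0]);
([::1;1;3;1;1;3;1;2;2;1],0,false,[::2;0]);
([::0;0;0;3;1;1;3;1;2;2;1],0,false,[::2;0]);
([::1;1;1;3],2,false,[::3;1;1;3;1;2;2;2;0]);
([::1;1;1],2,true,[::3;1;1;3;1;2;2;2;0]);
([::1;1;1;3;1;1;3;1;2;2;2;1;1;1],0,false,[::0]);
([::1;1],2,true,[::3;1;1;3;1;2;2;2;0;0;0]);
([::0;0;3;3],2,false,[::0;3;1;1]);
([::0;0;3],2,true,[::0;3;1;1]);
([::0;0;0;3;1;1;3;3],2,false,[::]);
([::3],0,true,[::1;3;1;1]);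
([::2;2;1;1],0,false,[::2;2;1;3;1;1]);
([::2;2;1],0,true,[::2;2;1;3;1;1]);
([::2;2],0,true,[::2;2;1;3;1;1]);
([::1;3;1;1;3;3],2,false,[::1;1]);
([::1;3;1;1;3],2,true,[::1;1]);
([::1;3;1;1;3;3;1],0,true,[::]);
([::1;3;1;1;2;2],0,true,[::2]);
([::1;3;1;1;3;3;3;1;1],0,false,[::]);
([::3],2,false,[::1;3;1;1;3;3;0]);
([::],2,true,[::1;3;1;1;3;3;0]);
([::1;3;1;1;3;3;0;3],2,false,[::]);
([::1;3;1;1;3;3;0],2,true,[::]);
([::3],2,false,[::1;3;1;1;2;2;2;0]);
([::],2,true,[::1;3;1;1;2;2;2;0]);
([::1;3;1;1;2;2;1],0,false,[::2;0]);
([::1;3;1;1;2;2],0,true,[::2;0]);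
([::3],2,false,[::1;3;1;1;2;2;2;2;0]);
([::],2,true,[::1;3;1;1;2;2;2;2;0]);
([::1;3;1;1],0,false,[::1;1;2;2;2;2;0]);
([::1;3;1;1;2;2;2;1],0,false,[::2;0]);
([::1;3;1;1;2;2;2],0,true,[::2;0]);
([::1;3;1;1;3;3;1;1],0,true,[::3;0]);
([::1;3;1;1;3;3;3;1;1;1;1],0,false,[::0]);
([::1;1;1],0,true,[::1;3;1;1;3;3;0;0]);
([::1;1],0,true,[::1;3;1;1;3;3;0;0]);
([::1;1;1],0,true,[::1;3;1;1;2;2;2;0;0]);
([::1;1],0,true,[::1;3;1;1;2;2;2;0;0]);
([::0;3],2,true,[::0;0;3;0]);
([::0;0;0;3],2,true,[::3;1;1;2]);
([::0;0;0],2,true,[::3;1;1;2]);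
([::1],0,false,[::1;3;1;1;1;1;2]);
([::0;0;0;3;1;1;2;0;0;3],2,true,[::]);
([::0;0;0;3],0,true,[::1;1;2;2]);
([::3],2,false,[::1;3;1;1;2;2;1]);
([::],2,true,[::1;3;1;1;2;2;1]);
([::1;3;1;1;2;1],0,false,[::2;1]);
([::0;0;0;3;1;1;2;1],0,false,[::2;0]);
([::3],2,false,[::1;3;1;1;2;2;1;1]);
([::1;3;1;1;2;1],0,false,[::2;1;1]);
([::3],2,false,[::1;3;1;1;2;2;0;0;0;0;0]);
([::],2,true,[::1;3;1;1;2;2;0;0;0;0;0]);
([::3;1;1;1],0,true,[::1;3;1;1;2;2;0;0]);
([::3;1;3;1;1;2;2;1],0,false,[::0;0]);
([::3;1;3;1;1;2;2;1],0,false,[::0]);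
([::1],0,false,[::2;2;2;2;1;3;1;1;2;2;0;0]);
([::2;2;2;2;1;3;1;1;2;2;1],0,false,[::0;0]);
([::2;2;2;2;1;3;1;1;2;2;1],0,false,[::0]);
([::1;3;1;1;2;1;2;1],0,false,[::0;0]);
([::1;3;1;1;2;0;0;0;3],2,false,[::0;2;0;0]);
([::1;3;1;1;2;0;0;0;0;2;1;1],0,false,[::0;0]);
([::3;1;3;1;1;3;3;3],2,true,[::2;2;0;0;0]);
([::1;3;1;1;3;3;3;3],2,false,[::2;1;2;0;0;0]);
([::0;0;0;3],2,true,[::3;1;1;3;0;2]);
([::1;1],0,false,[::3;3;1;3;1;1;3;0;2]);
([::3;3;1;1;1],0,false,[::1;3;1;1;3;0;2]);
([::3;3;1;1],0,true,[::1;3;1;1;3;0;2]);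
([::3;3;1],0,true,[::1;3;1;1;3;0;2]);
([::1;3;1;1;3;3;1;1],0,false,[::0;2]);
([::1;3;1;1;3;3;1],0,true,[::0;2]);
([::1;3;1;1;3;3],0,true,[::0;2]);
([::1;3;1;1;3;3;1;1],0,false,[::2]);
([::1;3;1;1;3;3;0],2,true,[::2]);
([::1;3;1;1;3;3;3;1;1],0,false,[::0;2]);
([::1;3;1;1;3;3;1;1],0,false,[::3;3;0;2]);
([::1;3;1;1;3;0;3;1],0,true,[::]);
([::1;3;1;1;3;0;2;2;2;2;1],0,true,[::]);
([::1;3;1;1;3],2,true,[::3;0;2;2;2;2;2]);
([::1;3;1;1;3;0;3;1;1],0,true,[::3]);
([::0;0;3;3],2,false,[::0;3;1;1;3;0;2;0;0]);
([::0;0;3],2,true,[::0;3;1;1;3;0;2;0;0]);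
([::0;0],2,true,[::0;3;1;1;3;0;2;0;0]);
([::3],2,true,[::1;3;1;1;3;0;2;2;1]);
([::1;3;1;1;3;0;2;2;0;0;3],2,true,[::0;0]);
([::0;0;0;3;1],0,true,[::1;1;3;0;2;2;0]);
([::0;0;0;3],0,true,[::1;1;3;0;2;2;0]);
([::1;3;1;1;3;0;2;2;1],0,false,[::2;1]);
([::1;3;1;1;3;0;2;2],0,true,[::2;1]);
([::1;3;1;1;3;3;1;1;1],0,true,[::0;2;2;2;0]);
([::1;3;1;1;3;3;1;1],0,true,[::0;2;2;2;0]);
([::1;1],0,false,[::1;3;1;1;2;2;2;0;2;2;2;0]);
([::1;3;1;1;2;2;2;0;2;2;2;1;1;1],0,false,[::0]);
([::1;1],0,false,[::1;3;1;1;3;0;2;2;1;2;0]);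
([::1;3;1;1;3;0;2;2;1;3;3],2,true,[::2;0]);
([::1;3;1;1;3;0;2;2;1;2;1],0,false,[::0]);
([::1;3;1;1;3;0;2;2;0;0;0;3],2,false,[::0;2;0]);
([::1;3;1;1;3;0;2;2;0;0;0;0;2;1;1;1],0,false,[::0]);
([::1;3;1;1;3;0;2;2;1],0,false,[::2;1;1;1]);
([::1;3;1;1;3;0;3;3;3;3],2,false,[::2;2;1;2;0;0]);
([::1;3;1;1;3;0;3;1;1],0,false,[::0;2]);
([::1;3;1;1;3;0;3;1;1],0,false,[::2]);
([::1;3;1;1;3;0;0;3;1;1],0,false,[::]);
([::1;3;1;1;3;0;0;2;1;3;3],2,false,[::1]);
([::0;0;0;3],2,true,[::3;1;1;3;0;0;2;0]);
([::0;0;0],2,true,[::3;1;1;3;0;0;2;0]);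
([::0;0;0;3],0,true,[::1;1;3;0;0;2;0]);
([::1;3;1;1;3;0;3;1;1],0,false,[::3;3;3;0;2;0]);
([::1;3;1;1;3;0;2;2;2],0,true,[::2;0;2;0]);
([::0;0;0;3],2,true,[::3;1;1;3;0;0;2;0;0]);
([::0;0;0],2,true,[::3;1;1;3;0;0;2;0;0]);
([::1],0,false,[::2;2;2;2;1;3;1;1;3;0;0;2;0;0;0]);
([::1;3;1;1;3;0;0;2;0;0;0;2;2;2;2;1],0,false,[::]);
([::1;3;1;1;3],2,true,[::3;0;0;2;2;1]);
([::1;3;1;1;3;0;0;2;2;1;3;3],2,true,[::]);
([::1],0,false,[::1;3;1;1;2;2;0;0;2;2;0]);
([::1;1;1],0,false,[::3;1;1;2;2;0;0;2;2;0]);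
([::1;3;1;1;2;2;0;0;3;3;3],2,true,[::2;2;0]);
([::1;3;1;1;2;2;0;0;2;2;1],0,false,[::0]);
([::1;3;1;1;2;2;0;0;2;2;1;1],0,false,[::]);
([::1],0,false,[::1;3;1;1;2;2;2;0;0;2;2;0]);
([::1;3;1;1;3],2,true,[::3;0;0;2;2;1;1;1]);
([::1;1;1],0,false,[::1;3;1;1;3;0;3;0;2;2;2]);
([::1;1;1],0,false,[::1;3;1;1;3;0;2;2;2;2;0;2;2;2]);
([::1;3;1;1;3;0;0;2;2;1],0,false,[::2;1]);
([::1;3],2,false,[::1;1;3;1;1;3;1]);
([::1;1;1;3;1;1;3;3],2,false,[::3;1]);
([::3;3;3],2,false,[::1;3;3;1;1;3;1]);
([::3],2,true,[::1;3;3;1;1;3;1]);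
([::1;3;3;1],0,false,[::1;1;3;1]);
([::1;3;3],0,true,[::1;1;3;1]);
([::3;3],2,true,[::1;3;3;3;1;1;3;1]);
([::1;3;1;3;3;1],0,false,[::3;1;3;1]);
([::1;1;1;1],0,false,[::1;3;1;1;3;3;1]);
([::3],2,true,[::1;3;1;1;3;3;1]);
([::3],2,true,[::1;3;1;1;2;2;2;1]);
([::],2,true,[::1;3;1;1;2;2;2;1]);
([::1;3;1;1;2;2],0,true,[::2;1]);
([::1;3;1;1;3;1;1;1;3],2,false,[::1;1]);
([::1],0,true,[::1;3;1;1;3;3;3;1]);
([::1;3;1;1;3;3;1;1;1],0,false,[::3;1]);
([::1;3;1;1;3;3;1;1],0,true,[::3;1]);
([::3;3],2,true,[::1;3;3;3;1;1;3]);
([::1;3;3;1;1;3],2,true,[::3;0]);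
([::1;3;3;1;1],2,true,[::3;0]);
([::0;0],2,true,[::0;3;1;1;3;1;1;3;1;1;3]);
([::0;0;0],2,true,[::3;1;1;3;1;1;3;1;1;3]);
([::1;1;3;3;3],2,false,[::1;1;2]);
([::1;1;3;3],2,true,[::1;1;2]);
([::0;3;3],2,true,[::0;0;3;0;2]);
([::0;3],2,true,[::0;0;3;0;2]);
([::0;0;0;2;2;1;1],0,true,[::2;2;0;2]);
([::0;0;0;2;2;1],0,true,[::2;2;0;2]);
([::0;0;0;2;2],0,true,[::2;2;0;2]);
([::0;3;3],2,true,[::0;0;0;2;1;1]);
([::3;1;1;1],0,false,[::3;3;1;1;1]);
([::2;1;1;3;3;3],2,false,[::1;1]);
([::1;1;3;3;3;3],2,false,[::1;1;2;0]);
([::1;1;1;3],2,true,[::1;2;0]);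
([::1;2;0;0;0;3;3],2,true,[::0;0]);
([::1;2;0;0;0;0;0;3;3],2,true,[::]);
([::1;2;1;1;1;3;3;3],2,true,[::]);
([::1],0,false,[::0;3;3;3;0;0;0;2;0]);
([::1],0,false,[::3;3;3;0;0;0;2;0]);
([::0;3;1;1;1],0,true,[::3;3;0;0;0;2;0]);
([::0;3;1;1],0,true,[::3;3;0;0;0;2;0]);
([::0;3;3;3;0;0;3],2,false,[::0;2;0]);
([::0;0;0;3;3;1;1],0,true,[::3;3;0;2;0]);
([::3;3;3],2,false,[::0;0;0;2;2;2;2;0;2;0]);
([::3;3],2,true,[::0;0;0;2;2;2;2;0;2;0]);
([::0;0;0;2;2;2;1;1],0,true,[::2;0;2;0]);
([::0;0;0;2;2;2;1],0,true,[::2;0;2;0]);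
([::0;0;0;2;2;2],0,true,[::2;0;2;0]);
([::0;0;0;0;2;2;2;1],0,true,[::2;0]);
([::0;0;0;0;2;2;2;2;1],0,true,[::2;0]);
([::3;1;1;1;3;3;1;1;1],0,false,[::0]);
([::3;3;3],2,false,[::2;0;0;3;0;0;0]);
([::1;2;2;2;1],0,true,[::2;0;0]);
([::1;2;0;0;3;3;1;1],0,false,[::]);
([::1],0,true,[::0;2;2;0;0;0;2;0;0]);
([::1;1;1;3;0;0;3],2,true,[::]);
([::0;0;0;3;0;0;3],2,true,[::]);
([::3;0;2;2;2;2;1;1],0,false,[::0]);
([::3;0;2;2;2;2;1;1],0,false,[::]);
([::0;0;3;0;0],2,true,[::0]);
([::0;0;0;3;0;0;3],2,true,[::0]);
([::0;0;0;3;0;0;0;3],2,true,[::]);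
([::3;0;0;2;2;2;1;1;1;1],0,false,[::0]);
([::3;1;1;1;3;0;3],2,true,[::0;0]);
([::3;1;1;1],0,true,[::3;0;2;2;2;0;0]);
([::3;3;0;2;2;2;1;1;1],0,false,[::0;0]);
([::3;3;0;2;2;2;2;1;1],0,false,[::0;0]);
([::3;3;0;2;2;2;2;1;1],0,false,[::0]);
([::1;3;3;3],2,false,[::1;2;2;1]);
([::1;3;3],2,true,[::2;1;2;0]);
([::3;3],2,true,[::1;2;2;1;1]);
([::3;3;3],2,true,[::1;2;2;2;1]);
([::3;3],2,true,[::1;2;2;2;1]);
([::1;2;2;1],0,true,[::2;1]);
([::1;2;2],0,true,[::2;1]);
([::0;0;0;3],2,true,[::0;2;2;2;1]);
([::0;0;0],2,true,[::0;2;2;2;1]);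
([::0;0;0;3],2,true,[::0;2;2;2;1;1]);
([::3],2,true,[::3;0;0;0;0;2]);
([::3;0;0],2,true,[::0;0;2]);
([::1],0,false,[::2;2;0;0;0;2;2;0;2]);
([::2;2;0;0;0;3],2,false,[::2;2;0;2]);
([::2;2;0;0;0;3;3],2,false,[::2;0;2]);
([::1;1;3;3;3],2,false,[::1;3;3;3]);
([::1;1;2;2],0,true,[::1;2;0]);
([::1;1;1;2;2;2;1],0,true,[::2;0]);
([::1],0,false,[::0;2;2;2;1;2;0]);
([::0;3;0;3],2,true,[::0;2;2;2]);
([::3;3;3;0;2;2;1;1;1;1],0,false,[::0;0;0;0]);
([::1;3;0;2;2;1;1;1;1],0,false,[::0]);
([::2;1;3;3;3],2,true,[::1;2;0]);
([::2;1;3;3],2,true,[::1;2;0]);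
([::0;3;3;3;3],2,false,[::2;1;1;2]);
([::1;3;3;3],2,true,[::1;2;2;0;0;0;2;0;0]);
([::0;0;0;0],2,true,[::0;0;3]);
([::0;3],2,true,[::3;0;0;0;0;2]);
([::0;0;3;0;3;1;1;1],0,true,[::3]);
([::0;0;3;0;3;1;1],0,true,[::3]);
([::0;0;2;2;1;1;3;3;3],2,true,[::2;0]);
([::0],2,true,[::3;0;2;2;2;0;0]);
([::1;1],0,false,[::0;0;2;2;2;1;2;2]);
([::0;0;2;2;2;1],0,true,[::1;2;2]);
([::1;1],0,false,[::0;0;2;2;2;0;0;2;0;2]);
([::0;0;2;2;1],0,true,[::2;0;0;2;0;2]);
([::0;0;2;2],0,true,[::2;0;0;2;0;2]);
([::1],0,false,[::0;2;2;2;2;0;0;3]);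
([::0;0;0;2;1;3;3;3],2,true,[::1;2]);
([::0;0;0;2;1;3;3],2,true,[::1;2]);
([::0;0],2,true,[::0;3;1;1;1;3]);
([::1;1],0,false,[::0;0;2;2;2;2;0;0;0;2;0]);
([::1;1],0,false,[::0;2;2;2;2;0;0;0;2;0]);
([::3;3],2,true,[::1;3;3;3;1;1]);
([::1;3;3;1;1;1],0,false,[::3;1;1]);
([::1;1;3;3;1;1],0,true,[::3;1]);
([::3;3;3],2,true,[::2;0;0;0;2]);
([::3;3],2,true,[::2;0;0;0;2]);
([::2;0;0;3;3;3],2,false,[::0;2]);
([::2;0;0;3;1;1;1],0,true,[::0;2]);
([::2;0;0;3;1;1],0,true,[::0;2]);
([::2;0;0;2;0;2;1;3],2,true,[::1;1]);
([::0;0;0;3;0;3;3;3],2,true,[::0;2;0;0;2;0;2]);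
([::0;0;0;0;0;2;0;0;3;1;1;1;1],0,false,[::0;2]);
([::1;3;3;3;3],2,false,[::2;0;0;2;0;2;2;1]);
([::0;3],2,true,[::0;0;2;0;0;0;2;2]);
([::0],2,true,[::0;0;2;0;0;0;2;2]);
([::1;1],0,false,[::0;3;0;3;3;3;3;0;2;0;0;0;2]);
([::1;3;3;0;0;3;3;3],2,false,[::2;0]);
([::1;3;3;3;3],2,false,[::1;3;3;3;0;0;2;0]);
([::3;3],2,true,[::1;1;3;1;1;1;1;1;3;1;2]);
([::3;3;1;3;3;3;1],0,true,[::3;1;1;3;1;2]);
([::3;3;1;3;1;1;3;1;2;1;1;3],2,true,[::1;1]);
([::1;3;3],2,true,[::1;3;3;3;1;3;1;1;3;1;2]);
([::3;1;1;1],0,false,[::3;3;1;3;3;1;1;3;1;2]);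
([::3;1;1],0,true,[::3;3;1;3;3;1;1;3;1;2]);
([::0;2;2],0,true,[::2;0;0;3;1;1;3;1;2;0]);
([::0;2;2;2],0,true,[::2;0;0;3;1;1;3;1;2;0]);
([::1;1;3;3;1;3;1;1;3;1;2;0;0;3],2,true,[::]);
([::3;3],2,true,[::1;3;3;1;3;1;2;2;0]);
([::3],2,true,[::1;3;3;1;3;1;2;2;0]);
([::1;3;3;3],2,true,[::1;3;1;1;3;1;2;2;0;0;2;2;2;0]);
([::1;3;3;3],2,false,[::1;3;3;1;1;3;1;2;2;2]);
([::1;1;3;3;3;3],2,false,[::1;3;3;1;1;3;1;2;2;2;0]);
([::1;1;3;3;3],2,true,[::1;3;3;1;1;3;1;2;2;2;0]);
([::0;0;0],2,true,[::3;1;1;3;3]);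
([::2;2;1;3;3;3],2,true,[::1;2;2;1;3;1;1]);
([::2;2;0;0;3;3],2,false,[::0;2;2;1;3;1;1]);
([::1;3;1;1;3;3;1;1;3;3],2,false,[::]);
([::1;3;1;1;3;3;1;1;3],2,true,[::]);
([::3;1;1;1],0,true,[::1;3;1;1;3;3;0]);
([::3;1;1],0,true,[::1;3;1;1;3;3;0]);
([::2;1],0,true,[::2;2;2;1;3;1;1;3;3;0]);
([::1;3;1;1;3;3;1;1;1],0,true,[::0;3]);
([::1;3;1;1;3;3;1;1],0,true,[::0;3]);
([::3;1;1;1],0,true,[::1;3;1;1;2;2;2;0]);
([::3;1;3;1;1;2;2;2;1],0,false,[::0]);
([::1;3;1;1;2;2;1;3;3;3],2,true,[::2;0]);
([::3],2,false,[::1;3;1;1;2;2;2;1;2;0]);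
([::1;3;1;1],0,false,[::1;1;2;2;2;1;2;0]);
([::0;3;1;1;2;2;2;0;0;3],2,true,[::]);
([::0;2;2;1],0,true,[::2;0;0;3;0]);
([::0;0;0;2;2;1;1;3;3;3],2,true,[::2]);
([::1;1;3;1;1;1;3;3],2,true,[::1;2]);
([::3;1;1;1],0,true,[::1;3;1;1;2;2;1]);
([::1;3;1;1;2;1;3;3],2,true,[::2;1]);
([::3;1;1;1],0,true,[::1;3;1;1;2;2;1;1]);
([::3;1;1;1],0,true,[::1;3;1;1;2;2;0]);
([::3;1;1;1],0,true,[::1;3;1;1;2;2]);
([::1;2;1],0,true,[::2;2;2;1;3;1;1;2;2;0;0]);
([::2;1],0,true,[::2;2;2;1;3;1;1;2;2;0]);
([::2],0,true,[::2;2;2;1;3;1;1;2;2;0]);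
([::1;1;3;3;1;3;1;1;3;0;3;3],2,true,[::2]);
([::3],2,true,[::1;3;1;1;3;3;1;2]);
([::3],2,true,[::1;3;1;1;3;3;0;0;0;0;2]);
([::1;3;1;1;3;0;2;2;2;2;0;0;3],2,true,[::0]);
([::0;0;2;2;2;1],0,true,[::2;0;3;1;1;3;0;2;0;0]);
([::2;2;2;1;3;1;1;3;0;3;3;3],2,true,[::2;2;1]);
([::1;3;1;1;3;0;2;2;1;3;3;3],2,true,[::2;1]);
([::1;3;1;1;3;0;2;2;1;3;3],2,true,[::2;1]);
([::1;1;1],0,false,[::1;3;1;1;3;3;0;0;0;2;2;2;0]);
([::1;3;1;1;3;0;2;2;1;3;3;3],2,true,[::2]);
([::0;0;0;2;2;2;1],0,true,[::1;1;3;0;0;2;0]);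
([::1;3],2,true,[::1;3;1;1;2;2;0;0;2;2;0]);
([::1;1;3;1;1;2;2;0;0;3;3;3],2,true,[::2;2;0]);
([::1;1;1;3;1;1;2;2;1;1;1],0,true,[::0;0;2;2;0]);
([::1;1],0,true,[::1;3;1;1;2;2;0;0;2;2;2;0]);
([::1],0,true,[::1;3;1;1;2;2;0;0;2;2;2;0]);
([::1;3;1;1;2;2;0;0;3;3;3],2,true,[::2;2]);
([::1;3;1;1;2;2;0;0;3;3;3],2,true,[::2;2;1;1]);
([::1;1;3;1;1;2;2;2;1;1;1],0,true,[::0;0;2;2;0]);
([::1;3;1;1;2;2;0;0;3;3;3],2,true,[::2;2;1;1;1]);
([::1;3;1;1;3;0;0;2;2;1;3;3;3;3],2,false,[::2;1]);
([::3;3;3],2,false,[::1;1;1;3;1;1;3;3;3;1]);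
([::1;3;3;0;0;3],2,true,[::3;1]);
([::2;2;1;3;3;1;1;1],0,false,[::3;1;1;3;1]);
([::2;2;2;1;3;1;1;2;2;1],0,true,[::2;1]);
([::2;2;2;1;3;1;1;2;2],0,true,[::2;1]);
([::2;2;1],0,true,[::2;2;1;3;1;1;2;2;2;1]);
([::2;2],0,true,[::2;2;1;3;1;1;2;2;2;1]);
([::3],2,false,[::1;3;1;1;2;2;0;0;0;0;2;1]);
([::1;3;1;1;2;1],0,true,[::2;0;0;0;0;2;1]);
([::1;3;1;1;2],0,true,[::2;0;0;0;0;2;1]);
([::0;0;3],2,true,[::3;1;1;3;3;3;1]);
([::1;3;3;1;1;2],0,true,[::2;0]);
([::1;1;2;2;1;1;3;3;3],2,true,[::2]);
([::3;3],2,false,[::0;2;2;0;0;3;0;2]);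
([::3],2,true,[::0;2;2;0;0;3;0;2]);
([::0;2;2;0;0;0;3;3],2,true,[::2;1;1]);
([::2;1;3;3;3],2,true,[::1;3;3;3;1;1]);
([::1;2;0;0;3],2,true,[::0;2;2;0;0]);
([::1],0,false,[::1;2;0;0;0;0;0;2;2]);
([::1;2;1;1;3;3;3],2,true,[::1;2]);
([::1;2;1;1;3;3],2,true,[::1;2]);
([::3;1;1;1;1],0,false,[::3;3;0;0;0;2;0]);
([::3;3;3;3],2,false,[::1;3;3;3;0;0;0;2;0]);
([::3;3],2,true,[::1;3;3;3;0;0;0;2;0]);
([::1;1],0,true,[::0;3;0;3;3;0;0;0;2;0]);
([::0;3;3;1;1;1],0,true,[::3;0;0;3;0;2;0]);
([::1;2;2;1],0,true,[::2;0;0;0;2;0;0]);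
([::1;3;3;3],2,true,[::2;0;0;3;3;1;1]);
([::1;1;1;3;0;3],2,true,[::0;2;2;2]);
([::0;0;0;3;0;3],2,true,[::0;2;2;2]);
([::3;0;2;2;1],0,true,[::2;2;1;1]);
([::0;0;0;3;0;3],2,true,[::0;2;2;2;0]);
([::3;0;3],2,true,[::0;2;2;2;1;1;1]);
([::3;3;0;2;2;2;1;3;3;3],2,true,[::]);
([::3;3;0;2;2;2;1],0,true,[::2]);
([::3;3;0;2;2;2],0,true,[::2;1]);
([::1;3;3;3;1;2;1],0,true,[::2;1]);
([::1;3;3;3;1;2],0,true,[::2;1]);
([::1;2;2;1],0,true,[::2;1;2;0]);
([::2;1],0,true,[::2;1;2;2;1;1]);
([::2;2;1],0,true,[::1;2;2;2;1]);
([::1;2;1],0,true,[::2;0;0;0;0;2;1]);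
([::0;0;0;2;2;2;0;2;2;2;1;3;3;3],2,true,[::1]);
([::2;1],0,true,[::2;0;0;0;0;2]);
([::2],0,true,[::2;0;0;0;0;2]);
([::3;3],2,true,[::3;0;0;2;2;2;2;0;0;2]);
([::1;2;2;0;0;3;3],2,true,[::0;2;2;0;2]);
([::2;1],0,true,[::2;0;0;0;3;0;2]);
([::1;1;2;1],0,true,[::2;0;0;0;2;0]);
([::1;1;2],0,true,[::2;0;0;0;2;0]);
([::1;1;1;2;2],0,true,[::2;0;0;0;2;0]);
([::3;3;3;1;1;1],0,true,[::0;2;2]);
([::],2,true,[::0;2;2;0;0;0;0;2]);
([::3],2,true,[::0;2;2;2;0;2;2;2;0;0]);
([::2;2;2;1],0,true,[::1;2;2]);
([::2;2;1],0,true,[::2;0;0;2;0;2]);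
([::0;0;3;3;3],2,true,[::2;2;0;0;0;2;0;0;2;0;2]);
([::0;0;3;3;3],2,true,[::2;2;0;0;0;0;2;0;0;2;0;2]);
([::2;2;2;2;0;0;3],2,true,[::3]);
([::2;2;2;1],0,true,[::2;0;0;0;2;0]);
([::2;2;2],0,true,[::2;0;0;0;2;0]);
([::2;1;1],0,false,[::2;2;0;0;0;2]);
([::2;0;0;3;3;1;1;1],0,true,[::3;0;2]);
([::2;0;0;3;3;1],0,true,[::3;0;2]);
([::2;0;0],2,true,[::3;0;0;0;2]);
([::2;0;0;3],2,true,[::2;0;2;1;2;2;2;1;1]);
([::0;0;0;3],2,true,[::3;0;2;0;2;0;0;2;0;2]);
([::0;0;2;2],0,true,[::2;0;0;0;2;0;3;1;1;3;0;2;0;0]);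
([::0;0;0;2;2],0,true,[::2;0;3;0;0;2;0]);
([::0;3],2,false,[::0;2;2;1;1;3;3;3;1]);
([::2;1;1],0,true,[::2;2;0;2;2;0;0;3;0;2]);
([::1;1;2;0;0;0;0],2,true,[::0;2;2]);
([::1;2;1;1;2;2],0,true,[::1;2]);
([::3;1;1;1;1;3;3;0;3],2,true,[::0;0;2;0]);
([::3;1;1;1;1;3;3;0],2,true,[::0;0;2;0]);
([::0;3;3;0;3],2,true,[::3;0;0;3;0;2;0]);
([::0;3;3;0],2,true,[::3;0;0;3;0;2;0]);
([::0;0;0],2,true,[::3;0;2;2;2;0;2;2;2;0]);
([::1;1],0,true,[::3;3;0;2;2;2;0;0;0;2]);
([::],0,true,[::1;2;0;0;0;2;0;0;0;0;2;1]);
([::0;0;3],2,true,[::0;2;2;2;0;2;2;2;1;2;1]);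
([::2;1;1],0,true,[::0;0;0;2;0;0;0;0;2]);
([::1;1],0,true,[::2;0;0;0;0;2;0;0;0;0;2]);
([::],0,true,[::2;0;0;0;0;2;0;0;0;0;2]);
([::1],0,true,[::2;0;0;2;2;2;2;0;0;2]);
([::2;0;0;2;2;2;2;1;1;1],0,true,[::0;0;2]);
([::1;1],0,false,[::2;2;2;0;2;2;2;0;2;2;2;0;0]);
([::1;1;1],0,true,[::0;0;2;2;2;0;0;0;2;0;0;2;0;2]);
([::1;1;1],0,true,[::2;2;2;0;0;0;0;2;0;0;0;2;0]);
([::1],0,true,[::2;2;2;0;0;0;0;2;0;0;0;2;0])]%N.

Lemma certUV : check_cert basisU stepsUV basisV.
Proof. Time vm_compute. reflexivity. Qed.
Lemma certRV : check_cert basisR stepsRV basisV.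
Proof. Time vm_compute. reflexivity. Qed.
Lemma certVg : check_cert basisV stepsVg (targets basisV).
Proof. Time vm_compute. reflexivity. Qed.

Section Final.
Variables (R : comUnitRingType) (A : unitAlgType R) (a b c d : R) (s1 s2 : A).
Hypothesis H : H4_rels a b c d s1 s2.
Let un1 : s1 \is a GRing.unit. Proof. by case: H => [[_ ? _] _]. Qed.
Let un2 : s2 \is a GRing.unit. Proof. by case: H => [[_ _ ?] _]. Qed.

Local Notation ev := (evw s1 s2).

Lemma inv2 (s : A) : s \is a GRing.unit -> s ^- 2 = s^-1 * s^-1.
Proof. by move=> _; rewrite -exprVn expr2. Qed.

Lemma ev_yXy : ev [:: 2; 1; 2]%N = s2 * s1^-1 * s2.
Proof. by rewrite /evw /= mul1r. Qed.
Lemma ev_YxY : ev [:: 3; 0; 3]%N = s2^-1 * s1 * s2^-1.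
Proof. by rewrite /evw /= mul1r. Qed.
Lemma ev_YXXY : ev [:: 3; 1; 1; 3]%N = s2^-1 * s1 ^- 2 * s2^-1.
Proof. by rewrite /evw /= mul1r inv2 // !mulrA. Qed.
Lemma ev_yXXy : ev [:: 2; 1; 1; 2]%N = s2 * s1 ^- 2 * s2.
Proof. by rewrite /evw /= mul1r inv2 // !mulrA. Qed.
Lemma ev_YYXXYY : ev [:: 3; 3; 1; 1; 3; 3]%N = s2 ^- 2 * s1 ^- 2 * s2 ^- 2.
Proof. by rewrite /evw /= mul1r !inv2 // !mulrA. Qed.
Lemma ev_om : ev [:: 2; 0; 0; 2]%N = omega s1 s2.
Proof. by rewrite /evw /= mul1r /omega expr2 !mulrA. Qed.
Lemma ev_omi : ev [:: 3; 1; 1; 3]%N = (omega s1 s2)^-1.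
Proof.
rewrite ev_YXXY /omega [RHS]invrM ?unitrMl ?unitrX //.
by rewrite [(s2 * s1 ^+ 2)^-1]invrM ?unitrX // mulrA.
Qed.
Lemma ev_omi2 : ev [:: 3; 1; 1; 3; 3; 1; 1; 3]%N = (omega s1 s2) ^- 2.
Proof.
rewrite inv2; last by rewrite /omega !unitrMl ?unitrX.
rewrite -ev_omi -ev_cat //.
Qed.

Lemma U_closed0 : U s1 s2 0. Proof. exact: Defs.span0. Qed.
Lemma U_closedD x y : U s1 s2 x -> U s1 s2 y -> U s1 s2 (x + y).
Proof. exact: Defs.spanD. Qed.
Lemma U_closedZ r x : U s1 s2 x -> U s1 s2 (r *: x).
Proof. exact: Defs.spanZ. Qed.
Lemma R_closed0 : U_rhs s1 s2 0. Proof. exact: Defs.span0. Qed.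
Lemma R_closedD x y : U_rhs s1 s2 x -> U_rhs s1 s2 y -> U_rhs s1 s2 (x + y).
Proof. exact: Defs.spanD. Qed.
Lemma R_closedZ r x : U_rhs s1 s2 x -> U_rhs s1 s2 (r *: x).
Proof. exact: Defs.spanZ. Qed.

Lemma u1p i : u1 s1 (s1 ^+ i). Proof. exact: subalg_pow. Qed.
Lemma u2p i : u2 s2 (s2 ^+ i). Proof. exact: subalg_pow. Qed.

Lemma bi_in (m : A) i k : smul (smul (u1 s1) (elt m)) (u1 s1) (s1 ^+ i * m * s1 ^+ k).
Proof. by apply: smul_in; [apply: smul_in; [apply: u1p | apply: elt_self] | apply: u1p]. Qed.
Lemma l_in (m : A) i : smul (u1 s1) (elt m) (s1 ^+ i * m).
Proof. by apply: smul_in; [apply: u1p | apply: elt_self]. Qed.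
Lemma M_in i j k : smul (smul (u1 s1) (u2 s2)) (u1 s1) (s1 ^+ i * s2 ^+ j * s1 ^+ k).
Proof. by apply: smul_in; [apply: smul_in; [apply: u1p | apply: u2p] | apply: u1p]. Qed.

Lemma basisU_in w : w \in basisU -> U s1 s2 (ev w).
Proof.
rewrite /basisU (mem_cat w Mw) (mem_cat w (bimod [:: 2; 1; 2]%N)) (mem_cat w (bimod [:: 3; 0; 3]%N)) (mem_cat w (lmod [:: 3; 1; 1; 3]%N)) (mem_cat w (bimod [:: 2; 1; 1; 2]%N)).
move=> /orP [hw|/orP [hw|/orP [hw|/orP [hw|/orP [hw|hw]]]]].
- apply: (@Mw_in R A s1 s2 (U s1 s2) _ _ hw) => i j k.
  do 5 apply: sadd_l; exact: M_in.
- apply: (@bimod_in R A s1 s2 (U s1 s2) _ _ _ hw) => i k; rewrite ev_yXy.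
  do 4 apply: sadd_l; apply: sadd_r; exact: bi_in.
- apply: (@bimod_in R A s1 s2 (U s1 s2) _ _ _ hw) => i k; rewrite ev_YxY.
  do 3 apply: sadd_l; apply: sadd_r; exact: bi_in.
- apply: (@lmod_in R A s1 s2 (U s1 s2) _ _ _ hw) => i; rewrite ev_YXXY.
  do 2 apply: sadd_l; apply: sadd_r; exact: l_in.
- apply: (@bimod_in R A s1 s2 (U s1 s2) _ _ _ hw) => i k; rewrite ev_yXXy.
  apply: sadd_l; apply: sadd_r; exact: bi_in.
- apply: (@bimod_in R A s1 s2 (U s1 s2) _ _ _ hw) => i k; rewrite ev_YYXXYY.
  apply: sadd_r; exact: bi_in.
Qed.

Lemma basisR_in w : w \in basisR -> U_rhs s1 s2 (ev w).
Proof.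
rewrite /basisR (mem_cat w Mw) (mem_cat w (bimod [:: 2; 1; 2]%N)) (mem_cat w (bimod [:: 3; 0; 3]%N)) (mem_cat w (lmod [:: 2; 0; 0; 2]%N)) (mem_cat w (lmod [:: 3; 1; 1; 3]%N)).
move=> /orP [hw|/orP [hw|/orP [hw|/orP [hw|/orP [hw|hw]]]]].
- apply: (@Mw_in R A s1 s2 (U_rhs s1 s2) _ _ hw) => i j k.
  do 5 apply: sadd_l; exact: M_in.
- apply: (@bimod_in R A s1 s2 (U_rhs s1 s2) _ _ _ hw) => i k; rewrite ev_yXy.
  do 4 apply: sadd_l; apply: sadd_r; exact: bi_in.
- apply: (@bimod_in R A s1 s2 (U_rhs s1 s2) _ _ _ hw) => i k; rewrite ev_YxY.
  do 3 apply: sadd_l; apply: sadd_r; exact: bi_in.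
- apply: (@lmod_in R A s1 s2 (U_rhs s1 s2) _ _ _ hw) => i; rewrite ev_om.
  do 2 apply: sadd_l; apply: sadd_r; exact: l_in.
- apply: (@lmod_in R A s1 s2 (U_rhs s1 s2) _ _ _ hw) => i; rewrite ev_omi.
  apply: sadd_l; apply: sadd_r; exact: l_in.
- apply: (@lmod_in R A s1 s2 (U_rhs s1 s2) _ _ _ hw) => i; rewrite ev_omi2.
  apply: sadd_r; exact: l_in.
Qed.

Definition Bspan : A -> Prop := Defs.span (fun v => exists2 w : seq nat, w \in basisV & v = ev w).

Lemma V_in_U w : w \in basisV -> U s1 s2 (ev w).
Proof.
move=> hw; exact: (@check_cert_sound R A a b c d s1 s2 H (U s1 s2) U_closedD U_closedZ basisU stepsUV basisV basisU_in certUV w hw).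
Qed.

Lemma V_in_R w : w \in basisV -> U_rhs s1 s2 (ev w).
Proof.
move=> hw; exact: (@check_cert_sound R A a b c d s1 s2 H (U_rhs s1 s2) R_closedD R_closedZ basisR stepsRV basisV basisR_in certRV w hw).
Qed.

Lemma Bspan_right v g : Bspan v -> (g < 4)%N -> Bspan (v * letA s1 s2 g).
Proof.
move=> hv hg; elim: hv => [|x [w hw ->]|x y _ hx _ hy|r x _ hx].
- by rewrite mul0r; apply: Defs.span0.
- have -> : ev w * letA s1 s2 g = ev (w ++ [:: g]).
    by rewrite ev_cat /evw /= mul1r.
  apply: (@check_cert_sound R A a b c d s1 s2 H Bspan _ _ basisV stepsVg (targets basisV) _ certVg).
  + by move=> ? ? ? ?; apply: Defs.spanD.
  + by move=> ? ? ?; apply: Defs.spanZ.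
  + by move=> w' hw'; apply: Defs.span_in; exists w'.
  + by apply/allpairsP; exists (w, g); split => //; move: hg; rewrite !inE; case: g => [|[|[|[|]]]].
- by rewrite mulrDl; apply: Defs.spanD.
- by rewrite -scalerAl; apply: Defs.spanZ.
Qed.

Lemma Bspan_all : (forall x : A, subalg [:: s1; s2; s1^-1; s2^-1] x) -> forall v, Bspan v.
Proof.
move=> gen v.
have h1 : Bspan 1.
  by apply: Defs.span_in; exists [::]; [vm_compute | ].
suff : forall u, Bspan u -> Bspan (u * v) by move/(_ 1 h1); rewrite mul1r.
elim: (gen v) => [x hx||x y _ hx _ hy|r x _ hx|x y _ hx _ hy] u hu.
- move: hx; rewrite !inE => /orP [/eqP ->|/orP [/eqP ->|/orP [/eqP ->|/eqP ->]]].
  + exact: (Bspan_right u 0%N hu isT).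
  + exact: (Bspan_right u 2%N hu isT).
  + exact: (Bspan_right u 1%N hu isT).
  + exact: (Bspan_right u 3%N hu isT).
- by rewrite mulr1.
- by rewrite mulrDr; apply: Defs.spanD; [apply: hx | apply: hy].
- by rewrite -scalerAr; apply: Defs.spanZ; apply: hx.
- by rewrite mulrA; apply: hy; apply: hx.
Qed.

End Final.

Theorem theorem3p3 (R : comUnitRingType) (A : unitAlgType R)
    (a b c d : R) (s1 s2 : A) :
  H4_rels a b c d s1 s2 ->
  (* A is generated as an R-algebra by s1^{±1}, s2^{±1} (as H_4 is) *)
  (forall x : A, subalg [:: s1; s2; s1^-1; s2^-1] x) ->
  seteq (U s1 s2) (U_rhs s1 s2) /\ (forall x : A, U s1 s2 x).
Proof.
move=> H gen.
have allU : forall x, U s1 s2 x.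
  move=> x; elim: (@Bspan_all R A a b c d s1 s2 H gen x) => [|v [w hw ->]|v v' _ h _ h'|r v _ h].
  - exact: U_closed0.
  - exact: (@V_in_U R A a b c d s1 s2 H w hw).
  - exact: U_closedD.
  - exact: U_closedZ.
have allR : forall x, U_rhs s1 s2 x.
  move=> x; elim: (@Bspan_all R A a b c d s1 s2 H gen x) => [|v [w hw ->]|v v' _ h _ h'|r v _ h].
  - exact: R_closed0.
  - exact: (@V_in_R R A a b c d s1 s2 H w hw).
  - exact: R_closedD.
  - exact: R_closedZ.
by split => // z; split.
Qed.
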